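(* For $i\ge1$ let $$y_i=(1+\alpha)\,\mathbf E\Big[\mathbb I_{\{Z\le i,\ \Lambda\ge 1\}}\frac{\Gamma(i+2\Lambda)}{\Gamma(i+2\Lambda+\alpha+2)}\cdot\frac{\Gamma(Z+2\Lambda+\alpha+1)}{\Gamma(Z+2\Lambda)}\Big].$$ Then, as $i\to\infty$, $$y_i\sim \lambda(1+\alpha)^2\Gamma(2+\alpha)\, i^{-2-\alpha}\ln i,$$ where $a_i\sim b_i$ means $a_i/b_i\to1$.
   Context: Fix $\lambda>0$ and an integer $k\ge1$, and let $\alpha=k/\lambda$. $\Lambda$ is a Poisson random variable with mean $\lambda$; $Z=\sum_{i=1}^{\Lambda}T_i$, where $T_1,T_2,\dots$ are i.i.d., independent of $\Lambda$, with $\mathbf P(T_1=j)=x_{j+1}$, $x_{j+1}=(1+\alpha)\Gamma(2+\alpha)\frac{\Gamma(j+1)}{\Gamma(3+\alpha+j)}$ for $j=0,1,2,\dots$. *)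

(* Defs.v *)
From Stdlib Require Import Reals Lra Lia Classical ClassicalEpsilon.
Open Scope R_scope.

Fixpoint rising_prod (x : R) (n : nat) : R :=
  match n with
  | O => x
  | S m => rising_prod x m * (x + INR (S m))
  end.

(* Gauss/Euler limit formula: Gamma x = lim n^x n! / (x (x+1) ... (x+n)). *)
Definition gauss_seq (x : R) (n : nat) : R :=
  Rpower (INR n) x * INR (Factorial.fact n) / rising_prod x n.

(* Gamma function (defined for x > 0, the only case used here);
   chosen as the limit of gauss_seq x. *)
Definition Gamma (x : R) : R :=
  epsilon (inhabits 0) (fun l => Un_cv (gauss_seq x) l).

(* Law of T_1: P(T_1 = j) = x_{j+1}. *)
Definition pT (alpha : R) (j : nat) : R :=
  (1 + alpha) * Gamma (2 + alpha) * Gamma (INR j + 1) / Gamma (3 + alpha + INR j).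

(* m-fold convolution: conv alpha m z = P(T_1 + ... + T_m = z). *)
Fixpoint conv (alpha : R) (m : nat) (z : nat) : R :=
  match m with
  | O => if Nat.eqb z 0 then 1 else 0
  | S m' => sum_f_R0 (fun j => pT alpha j * conv alpha m' (z - j)) z
  end.

Definition poisson (lambda : R) (m : nat) : R :=
  exp (- lambda) * lambda ^ m / INR (Factorial.fact m).

(* Integrand of y_i on the event {Lambda = m, Z = z}. *)
Definition yfactor (alpha : R) (i m z : nat) : R :=
  Gamma (INR i + 2 * INR m) / Gamma (INR i + 2 * INR m + alpha + 2)
  * (Gamma (INR z + 2 * INR m + alpha + 1) / Gamma (INR z + 2 * INR m)).

(* m-th term of the series for y_i  (m >= 1 enforced; Z <= i via the inner sum). *)
Definition yterm (lambda alpha : R) (i : nat) (m : nat) : R :=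
  if Nat.eqb m 0 then 0 else
  (1 + alpha) * poisson lambda m *
  sum_f_R0 (fun z => conv alpha m z * yfactor alpha i m z) i.

(* Main.v *)
Require Import Defs.
From Stdlib Require Import Reals Lra Lia Classical ClassicalEpsilon.
Open Scope R_scope.

Lemma exp_le_mono x y : x <= y -> exp x <= exp y.
Proof. intros [H|H]; [left; apply exp_increasing; auto | subst; lra]. Qed.

Lemma ln_le_mono x y : 0 < x -> x <= y -> ln x <= ln y.
Proof. intros Hx [H|H]; [left; apply ln_increasing; auto | subst; lra]. Qed.

Lemma ln_le_sub1 y : 0 < y -> ln y <= y - 1.
Proof. intros Hy. pose proof (exp_ineq1_le (ln y)) as H. rewrite exp_ln in H; lra. Qed.

Lemma ln_div' x y : 0 < x -> 0 < y -> ln (x / y) = ln x - ln y.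
Proof. intros. unfold Rdiv. rewrite ln_mult, ln_Rinv; try lra. apply Rinv_0_lt_compat; auto. Qed.

Lemma Rdiv_le_0_compat x y : 0 <= x -> 0 < y -> 0 <= x / y.
Proof. apply Rle_mult_inv_pos. Qed.

Lemma Rdiv_le_1 x y : 0 < y -> x <= y -> x / y <= 1.
Proof.
  intros. apply Rmult_le_reg_r with y; auto. unfold Rdiv.
  rewrite Rmult_assoc, Rinv_l by lra. lra.
Qed.

Lemma Rpower_pos x p : 0 < Rpower x p.
Proof. unfold Rpower; apply exp_pos. Qed.

Lemma amgm A t : 0 < A -> 0 <= t <= 1 -> Rpower A t <= t * A + (1 - t).
Proof.
  intros HA Ht.
  set (w := t*A + (1-t)).
  assert (Hw : 0 < w). { unfold w. destruct (Req_dec t 0). subst; lra. nra. }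
  assert (H1 := ln_le_sub1 (A / w) ltac:(apply Rdiv_lt_0_compat; auto)).
  assert (H2 := ln_le_sub1 (1 / w) ltac:(apply Rdiv_lt_0_compat; lra)).
  rewrite ln_div' in H1,H2 by lra. rewrite ln_1 in H2.
  assert (E: t*(A/w -1) + (1-t)*(1/w-1) = 0) by (unfold w in *; field; lra).
  assert (H3: t * (ln A - ln w) <= t * (A/w-1)) by (apply Rmult_le_compat_l; lra).
  assert (H4: (1-t) * (0 - ln w) <= (1-t) * (1/w-1)) by (apply Rmult_le_compat_l; lra).
  assert (H5: t * ln A <= ln w) by nra.
  unfold Rpower. rewrite <- (exp_ln w) by auto. apply exp_le_mono. lra.
Qed.

Lemma bern s u : 1 <= s -> 0 < u -> 1 + s * (u - 1) <= Rpower u s.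
Proof.
  intros Hs Hu.
  destruct (Rle_dec (1 + s*(u-1)) 0) as [Hle|Hgt].
  - pose proof (Rpower_pos u s); lra.
  - apply Rnot_le_lt in Hgt. set (v := 1 + s*(u-1)) in *.
    assert (Hi : 0 <= /s <= 1).
    { split. left; apply Rinv_0_lt_compat; lra. rewrite <- Rinv_1. apply Rinv_le_contravar; lra. }
    pose proof (amgm v (/s) Hgt Hi) as H.
    assert (E: /s * v + (1 - /s) = u) by (unfold v; field; lra).
    rewrite E in H.
    assert (Hv: v = Rpower (Rpower v (/s)) s).
    { rewrite Rpower_mult. replace (/s*s) with 1 by (field; lra). rewrite Rpower_1; auto. }
    rewrite Hv. apply Rle_Rpower_l. lra. split; auto. apply Rpower_pos.
Qed.

Lemma tangent p u w : 1 <= p -> 0 < u -> 0 < w ->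
  Rpower w p * (1 + p * (u / w - 1)) <= Rpower u p.
Proof.
  intros Hp Hu Hw.
  replace (Rpower u p) with (Rpower w p * Rpower (u/w) p).
  - apply Rmult_le_compat_l. left; apply Rpower_pos. apply bern; auto.
    apply Rdiv_lt_0_compat; auto.
  - rewrite Rpower_mult_distr; auto. f_equal; field; lra. apply Rdiv_lt_0_compat; auto.
Qed.

Lemma Rpower_1_base p : Rpower 1 p = 1.
Proof. unfold Rpower. rewrite ln_1, Rmult_0_r, exp_0; auto. Qed.

Lemma chord p t : 1 <= p -> 0 <= t <= 1 -> Rpower (1+t) p <= 1 + (Rpower 2 p - 1) * t.
Proof.
  intros Hp Ht.
  pose proof (tangent p 1 (1+t) Hp ltac:(lra) ltac:(lra)) as H1.
  pose proof (tangent p 2 (1+t) Hp ltac:(lra) ltac:(lra)) as H2.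
  rewrite Rpower_1_base in H1.
  assert (E: (1-t) * (1 + p*(1/(1+t) - 1)) + t * (1 + p*(2/(1+t)-1)) = 1) by (field; lra).
  assert (H3: (1-t) * (Rpower (1+t) p * (1 + p*(1/(1+t) - 1))) <= (1-t) * 1)
    by (apply Rmult_le_compat_l; lra).
  assert (H4: t * (Rpower (1+t) p * (1 + p*(2/(1+t) - 1))) <= t * Rpower 2 p)
    by (apply Rmult_le_compat_l; lra).
  assert (Eq: (1-t) * (Rpower (1+t) p * (1 + p*(1/(1+t) - 1))) + t * (Rpower (1+t) p * (1 + p*(2/(1+t) - 1))) = Rpower (1+t) p).
  { transitivity (Rpower (1+t) p * ((1-t) * (1 + p*(1/(1+t) - 1)) + t * (1 + p*(2/(1+t)-1)))); [ring|rewrite E; ring]. }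
  lra.
Qed.

Lemma Rpower2_ge p : 1 <= p -> 2 <= Rpower 2 p.
Proof. intros. pose proof (bern p 2 H ltac:(lra)). replace (p*(2-1)) with p in H0 by ring. lra. Qed.

Definition rp (x p : R) : R := if Rle_dec x 0 then 0 else Rpower x p.

Lemma rp_pos_eq x p : 0 < x -> rp x p = Rpower x p.
Proof. intros. unfold rp. destruct (Rle_dec x 0); auto. lra. Qed.

Lemma rp_0 p : rp 0 p = 0.
Proof. unfold rp. destruct (Rle_dec 0 0); auto. lra. Qed.

Lemma rp_nonneg x p : 0 <= rp x p.
Proof. unfold rp. destruct (Rle_dec x 0). lra. left; apply Rpower_pos. Qed.

Lemma rp_pos x p : 0 < x -> 0 < rp x p.
Proof. intros. rewrite rp_pos_eq; auto. apply Rpower_pos. Qed.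

Lemma rp_mono p x y : 0 <= p -> 0 <= x <= y -> rp x p <= rp y p.
Proof.
  intros Hp [Hx Hxy]. destruct (Req_dec x 0).
  - subst. rewrite rp_0. apply rp_nonneg.
  - rewrite !rp_pos_eq by lra. apply Rle_Rpower_l; lra.
Qed.

Lemma rp_plus x p q : 0 <= x -> rp x (p + q) = rp x p * rp x q.
Proof.
  intros Hx. destruct (Req_dec x 0).
  - subst. rewrite !rp_0; ring.
  - rewrite !rp_pos_eq by lra. apply Rpower_plus.
Qed.

Lemma rp_1 x : 0 <= x -> rp x 1 = x.
Proof.
  intros Hx. destruct (Req_dec x 0).
  - subst. apply rp_0.
  - rewrite rp_pos_eq by lra. apply Rpower_1. lra.
Qed.

Lemma rp_mult x y p : 0 <= x -> 0 <= y -> rp (x * y) p = rp x p * rp y p.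
Proof.
  intros Hx Hy. destruct (Req_dec x 0). subst. rewrite Rmult_0_l, rp_0; ring.
  destruct (Req_dec y 0). subst. rewrite Rmult_0_r, rp_0; ring.
  rewrite !rp_pos_eq by nra. rewrite Rpower_mult_distr; auto; lra.
Qed.

Lemma rp_pow2 x : 0 <= x -> rp x 2 = x * x.
Proof.
  intros. replace 2 with (1+1) by ring. rewrite rp_plus, rp_1; auto.
Qed.

Lemma superadd p x y : 1 <= p -> 0 <= x -> 0 <= y -> rp x p + rp y p <= rp (x + y) p.
Proof.
  intros Hp Hx Hy.
  replace p with ((p-1)+1) by ring.
  rewrite !rp_plus, !rp_1 by lra.
  assert (rp x (p-1) <= rp (x+y) (p-1)) by (apply rp_mono; lra).
  assert (rp y (p-1) <= rp (x+y) (p-1)) by (apply rp_mono; lra).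
  pose proof (rp_nonneg x (p-1)). pose proof (rp_nonneg y (p-1)). nra.
Qed.

Lemma upper_half p x y : 1 <= p -> 0 < x -> 0 <= y <= x ->
  rp (x + y) p <= rp x p + (Rpower 2 p - 1) * (y * rp x (p - 1)).
Proof.
  intros Hp Hx Hy.
  rewrite !rp_pos_eq by lra.
  replace (x + y) with (x * (1 + y/x)) by (field; lra).
  assert (0 < 1 + y/x) by (assert (0 <= y/x) by (apply Rdiv_le_0_compat; lra); lra).
  rewrite <- Rpower_mult_distr by lra.
  assert (Ht: 0 <= y/x <= 1).
  { split. apply Rdiv_le_0_compat; lra. apply Rdiv_le_1; lra. }
  pose proof (chord p (y/x) Hp Ht) as Hc.
  assert (Hxp: Rpower x p = Rpower x (p-1) * x).
  { rewrite <- (Rpower_1 x) at 3 by lra. rewrite <- Rpower_plus. f_equal; ring. }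
  pose proof (Rpower_pos x p).
  apply Rle_trans with (Rpower x p * (1 + (Rpower 2 p - 1) * (y/x))).
  apply Rmult_le_compat_l; lra.
  rewrite Hxp. right. field. lra.
Qed.

Lemma upperadd p x y : 1 <= p -> 0 <= x -> 0 <= y ->
  rp (x + y) p <= rp x p + rp y p + (Rpower 2 p - 1) * (y * rp x (p-1) + x * rp y (p-1)).
Proof.
  intros Hp Hx Hy.
  pose proof (Rpower2_ge p Hp) as H2.
  pose proof (rp_nonneg x p). pose proof (rp_nonneg y p).
  pose proof (rp_nonneg x (p-1)). pose proof (rp_nonneg y (p-1)).
  assert (0 <= (Rpower 2 p - 1) * (y * rp x (p-1))) by (apply Rmult_le_pos; nra).
  assert (0 <= (Rpower 2 p - 1) * (x * rp y (p-1))) by (apply Rmult_le_pos; nra).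
  destruct (Rle_dec y x).
  - destruct (Req_dec x 0).
    + assert (y = 0) by lra. subst. rewrite Rplus_0_r, rp_0. lra.
    + pose proof (upper_half p x y Hp ltac:(lra) ltac:(lra)). nra.
  - rewrite Rplus_comm. pose proof (upper_half p y x Hp ltac:(lra) ltac:(lra)). nra.
Qed.

Lemma rising_pos x n : 0 < x -> 0 < rising_prod x n.
Proof.
  intros Hx. induction n; cbn [rising_prod]; auto.
  apply Rmult_lt_0_compat; auto. pose proof (pos_INR (S n)). lra.
Qed.

Lemma INR_S_pos n : 0 < INR (S n).
Proof. apply lt_0_INR; lia. Qed.

Definition dterm (x : R) (j : nat) : R := ln (INR (S j)) - ln (x + INR (S j)).

Lemma fact_rising x n : 0 < x ->
  INR (Factorial.fact (S n)) / rising_prod x (S n) = exp (sum_f_R0 (dterm x) n) / x.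
Proof.
  intros Hx. induction n.
  - simpl sum_f_R0. unfold dterm. simpl rising_prod. simpl INR. rewrite ln_1.
    unfold Rminus. rewrite Rplus_0_l, exp_Ropp, exp_ln by lra. field. split; lra.
  - rewrite tech5.
    change (rising_prod x (S (S n))) with (rising_prod x (S n) * (x + INR (S (S n)))).
    change (Factorial.fact (S (S n))) with ((S (S n)) * Factorial.fact (S n))%nat.
    rewrite mult_INR.
    rewrite exp_plus. unfold dterm at 2. unfold Rminus.
    rewrite exp_plus, exp_ln by (apply INR_S_pos).
    rewrite exp_Ropp, exp_ln by (pose proof (INR_S_pos (S n)); lra).
    assert (HR := rising_pos x (S n) Hx).
    pose proof (INR_S_pos (S n)).
    replace (INR (S (S n)) * INR (Factorial.fact (S n)) / (rising_prod x (S n) * (x + INR (S (S n)))))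
      with ((INR (Factorial.fact (S n)) / rising_prod x (S n)) * (INR (S (S n)) / (x + INR (S (S n)))))
      by (field; split; lra).
    rewrite IHn. field. split; lra.
Qed.

Lemma gauss_S x n : 0 < x ->
  gauss_seq x (S n) = exp (x * ln (INR (S n)) + sum_f_R0 (dterm x) n) / x.
Proof.
  intros Hx. unfold gauss_seq.
  unfold Rdiv at 1. rewrite Rmult_assoc. fold (Rdiv (INR (Factorial.fact (S n))) (rising_prod x (S n))).
  rewrite fact_rising by auto. unfold Rpower. rewrite exp_plus. unfold Rdiv. ring.
Qed.

Definition lterm (x : R) (j : nat) : R :=
  x * (ln (INR (S (S j))) - ln (INR (S j))) + dterm x (S j).

Lemma T_shift x n :
  x * ln (INR (S (S n))) + sum_f_R0 (dterm x) (S n) = dterm x 0 + sum_f_R0 (lterm x) n.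
Proof.
  induction n.
  - simpl. unfold lterm. simpl. rewrite ln_1. ring.
  - rewrite tech5. rewrite (tech5 (lterm x)).
    rewrite <- (Rplus_assoc (dterm x 0)), <- IHn. unfold lterm. ring.
Qed.

Lemma ln_1p_le t : -1 < t -> ln (1 + t) <= t.
Proof. intros. pose proof (ln_le_sub1 (1+t) ltac:(lra)). lra. Qed.

Lemma ln_1p_ge t : 0 <= t -> t / (1 + t) <= ln (1 + t).
Proof.
  intros Ht. pose proof (ln_le_sub1 (/ (1+t)) ltac:(apply Rinv_0_lt_compat; lra)) as H.
  rewrite ln_Rinv in H by lra.
  replace (/ (1+t) - 1) with (- (t/(1+t))) in H by (field; lra). lra.
Qed.

Lemma lterm_bounds x j : 0 < x ->
  0 <= lterm x j <= x * (1 + x) * (/ INR (S j) - / INR (S (S j))).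
Proof.
  intros Hx. unfold lterm, dterm.
  set (K := INR (S j)).
  assert (HK : 1 <= K) by (unfold K; rewrite S_INR; pose proof (pos_INR j); lra).
  assert (E1: INR (S (S j)) = K + 1) by (unfold K; rewrite (S_INR (S j)); auto).
  rewrite E1.
  assert (A1: ln (K+1) - ln K = ln (1 + /K)).
  { rewrite <- ln_div' by lra. f_equal. field. lra. }
  assert (A2: ln (K+1) - ln (x + (K+1)) = - ln (1 + x/(K+1))).
  { replace (x + (K+1)) with ((K+1) * (1 + x/(K+1))) by (field; lra).
    rewrite ln_mult; try lra. assert (0 <= x/(K+1)) by (apply Rdiv_le_0_compat; lra). lra. }
  rewrite A1, A2.
  assert (P1: 0 < /K) by (apply Rinv_0_lt_compat; lra).
  assert (P2: 0 <= x/(K+1)) by (apply Rdiv_le_0_compat; lra).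
  pose proof (ln_1p_le (/K) ltac:(lra)) as U1.
  pose proof (ln_1p_ge (/K) ltac:(lra)) as L1.
  pose proof (ln_1p_le (x/(K+1)) ltac:(lra)) as U2.
  pose proof (ln_1p_ge (x/(K+1)) ltac:(lra)) as L2.
  replace (/K / (1 + /K)) with (/(K+1)) in L1 by (field; lra).
  replace (x / (K+1) / (1 + x/(K+1))) with (x / (K+1+x)) in L2 by (field; lra).
  split.
  - assert (x * / (K+1) <= x * ln (1 + /K)) by (apply Rmult_le_compat_l; lra).
    assert (x * / (K+1) = x / (K+1)) by (unfold Rdiv; ring). lra.
  - assert (x * ln (1 + /K) <= x * /K) by (apply Rmult_le_compat_l; lra).
    assert (x * / K - x / (K+1+x) <= x * (1+x) * (/K - /(K+1))).
    { replace (x * / K - x / (K+1+x)) with (x * (1+x) / (K * (K+1+x))) by (field; lra).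
      replace (x * (1+x) * (/K - /(K+1))) with (x * (1+x) / (K * (K+1))) by (field; lra).
      unfold Rdiv. apply Rmult_le_compat_l. nra.
      apply Rinv_le_contravar; nra. }
    lra.
Qed.

Lemma lsum_bound x n : 0 < x -> sum_f_R0 (lterm x) n <= x * (1 + x) * (1 - / INR (S (S n))).
Proof.
  intros Hx. induction n.
  - simpl. pose proof (lterm_bounds x 0 Hx). simpl in H. rewrite Rinv_1 in H. simpl. lra.
  - rewrite tech5. pose proof (lterm_bounds x (S n) Hx). lra.
Qed.

Lemma lsum_cv x : 0 < x -> { s | Un_cv (sum_f_R0 (lterm x)) s }.
Proof.
  intros Hx. apply growing_cv.
  - intro n. rewrite tech5. pose proof (lterm_bounds x (S n) Hx). lra.
  - exists (x * (1 + x)). intros y [n ->].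
    pose proof (lsum_bound x n Hx).
    assert (0 < / INR (S (S n))) by (apply Rinv_0_lt_compat; apply INR_S_pos).
    assert (0 < x * (1+x)) by nra. nra.
Qed.

Lemma gauss_cv_ex x : 0 < x -> exists l, Un_cv (gauss_seq x) l /\ 0 < l.
Proof.
  intros Hx. destruct (lsum_cv x Hx) as [s Hs].
  exists (exp (dterm x 0 + s) / x). split.
  - apply CV_shift with 2%nat.
    assert (H: Un_cv (fun n => exp (dterm x 0 + sum_f_R0 (lterm x) n) / x) (exp (dterm x 0 + s) / x)).
    { unfold Rdiv. apply CV_mult.
      - apply continuity_seq with (f := exp).
        + apply derivable_continuous_pt. apply derivable_pt_exp.
        + intros e He. destruct (Hs e He) as [N HN]. exists N. intros n Hn.
          unfold Rdist. replace (dterm x 0 + sum_f_R0 (lterm x) n - (dterm x 0 + s))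
            with (sum_f_R0 (lterm x) n - s) by ring. apply HN; auto.
      - intros e He. exists 0%nat. intros. unfold Rdist. rewrite Rminus_eq_0, Rabs_R0; auto. }
    intros e He. destruct (H e He) as [N HN]. exists N. intros n Hn.
    replace (n + 2)%nat with (S (S n)) by lia.
    rewrite gauss_S, T_shift by auto. apply HN; auto.
  - apply Rdiv_lt_0_compat; auto. apply exp_pos.
Qed.

Lemma Gamma_spec x : 0 < x -> Un_cv (gauss_seq x) (Gamma x) /\ 0 < Gamma x.
Proof.
  intros Hx. destruct (gauss_cv_ex x Hx) as [l [Hl Hp]].
  assert (HG : Un_cv (gauss_seq x) (Gamma x)).
  { unfold Gamma. apply epsilon_spec. exists l; auto. }
  split; auto. rewrite (UL_sequence _ _ _ HG Hl). auto.
Qed.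

Lemma Un_cv_ext_from (u v : nat -> R) l N :
  (forall n, (N <= n)%nat -> u n = v n) -> Un_cv v l -> Un_cv u l.
Proof.
  intros He Hv e Hep. destruct (Hv e Hep) as [M HM]. exists (max N M). intros n Hn.
  rewrite He by lia. apply HM; lia.
Qed.

Lemma Un_cv_eq_lim u l l' : Un_cv u l -> l = l' -> Un_cv u l'.
Proof. intros H <-; auto. Qed.

Lemma Un_cv_const c : Un_cv (fun _ => c) c.
Proof. intros e He. exists 0%nat. intros. unfold Rdist. rewrite Rminus_diag, Rabs_R0; auto. Qed.

Lemma inv_cv d : 0 < d -> Un_cv (fun n => / (INR n + d)) 0.
Proof.
  intros Hd e He. destruct (INR_unbounded (/e)) as [N HN]. exists N. intros n Hn.
  unfold Rdist. rewrite Rminus_0_r.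
  pose proof (pos_INR n). apply le_INR in Hn.
  rewrite Rabs_right by (left; apply Rinv_0_lt_compat; lra).
  assert (Hi: / e < INR n + d) by lra.
  apply Rinv_lt_contravar in Hi. rewrite Rinv_inv in Hi. auto.
  apply Rmult_lt_0_compat. apply Rinv_0_lt_compat; auto. lra.
Qed.

Lemma frac_cv c d : 0 < d -> Un_cv (fun n => (INR n + c) / (INR n + d)) 1.
Proof.
  intros Hd. apply Un_cv_ext_from with (v := fun n => 1 + (c - d) * / (INR n + d)) (N := 0%nat).
  - intros n _. pose proof (pos_INR n). field. lra.
  - eapply Un_cv_eq_lim. apply CV_plus. apply Un_cv_const.
    apply CV_mult. apply Un_cv_const. apply inv_cv; auto. ring.
Qed.

Lemma cont_Rpower s y : 0 < y -> continuity_pt (fun z => Rpower z s) y.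
Proof.
  intros Hy. apply derivable_continuous_pt. exists (s * Rpower y (s - 1)).
  apply derivable_pt_lim_power; auto.
Qed.

Lemma rising_shift x n : rising_prod x (S n) = x * rising_prod (x + 1) n.
Proof.
  induction n.
  - simpl. ring.
  - change (rising_prod x (S (S n))) with (rising_prod x (S n) * (x + INR (S (S n)))).
    rewrite IHn. cbn [rising_prod]. rewrite (S_INR (S n)). ring.
Qed.

Lemma gauss_succ x n : 0 < x -> (1 <= n)%nat ->
  gauss_seq (x + 1) n = gauss_seq x n * (x * (INR n / (INR n + (x + 1)))).
Proof.
  intros Hx Hn. unfold gauss_seq.
  assert (Hn' : 0 < INR n) by (apply lt_0_INR; lia).
  rewrite Rpower_plus, Rpower_1 by auto.
  pose proof (rising_shift x n) as E. cbn [rising_prod] in E.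
  assert (Hr: 0 < rising_prod (x+1) n) by (apply rising_pos; lra).
  assert (Hr2: 0 < rising_prod x n) by (apply rising_pos; lra).
  assert (E2: rising_prod (x+1) n = rising_prod x n * (x + INR (S n)) / x).
  { apply Rmult_eq_reg_l with x; [|lra]. rewrite <- E. field. lra. }
  rewrite E2. rewrite S_INR. field. repeat split; lra.
Qed.

Lemma Gamma_succ x : 0 < x -> Gamma (x + 1) = x * Gamma x.
Proof.
  intros Hx. destruct (Gamma_spec x Hx) as [H1 _].
  destruct (Gamma_spec (x+1) ltac:(lra)) as [H2 _].
  apply UL_sequence with (gauss_seq (x+1)); auto.
  apply Un_cv_ext_from with (N := 1%nat)
    (v := fun n => gauss_seq x n * (x * ((INR n + 0) / (INR n + (x+1))))).
  - intros n Hn. rewrite gauss_succ by auto. rewrite Rplus_0_r; auto.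
  - eapply Un_cv_eq_lim.
    apply CV_mult; [apply H1|]. apply CV_mult. apply Un_cv_const. apply frac_cv. lra. ring.
Qed.

Lemma rising_one n : rising_prod 1 n = INR (Factorial.fact (S n)).
Proof.
  induction n.
  - simpl. ring.
  - cbn [rising_prod]. rewrite IHn.
    change (Factorial.fact (S (S n))) with ((S (S n)) * Factorial.fact (S n))%nat.
    rewrite mult_INR. rewrite (S_INR (S n)). ring.
Qed.

Lemma Gamma_1 : Gamma 1 = 1.
Proof.
  destruct (Gamma_spec 1 ltac:(lra)) as [H1 _].
  apply UL_sequence with (gauss_seq 1); auto.
  apply Un_cv_ext_from with (N := 1%nat) (v := fun n => (INR n + 0) / (INR n + 1)).
  - intros n Hn. unfold gauss_seq. rewrite Rpower_1 by (apply lt_0_INR; lia).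
    rewrite rising_one. change (Factorial.fact (S n)) with ((S n) * Factorial.fact n)%nat.
    rewrite mult_INR, S_INR. pose proof (INR_fact_lt_0 n). pose proof (pos_INR n). field. lra.
  - apply frac_cv. lra.
Qed.

Lemma Gamma_2 : Gamma 2 = 1.
Proof. replace 2 with (1 + 1) by ring. rewrite Gamma_succ, Gamma_1 by lra. ring. Qed.

Lemma factor_L s y : 1 <= s -> 0 < y -> Rpower (y / (y + 1)) s <= y / (y + s).
Proof.
  intros Hs Hy.
  pose proof (bern s ((y+1)/y) Hs ltac:(apply Rdiv_lt_0_compat; lra)) as B.
  replace (1 + s * ((y+1)/y - 1)) with ((y+s)/y) in B by (field; lra).
  assert (Hp: Rpower (y/(y+1)) s * Rpower ((y+1)/y) s = 1).
  { rewrite Rpower_mult_distr by (apply Rdiv_lt_0_compat; lra).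
    replace (y / (y+1) * ((y+1)/y)) with 1 by (field; lra). apply Rpower_1_base. }
  pose proof (Rpower_pos (y/(y+1)) s).
  assert (0 < (y+s)/y) by (apply Rdiv_lt_0_compat; lra).
  replace (y/(y+s)) with (/ ((y+s)/y)) by (field; lra).
  apply Rmult_le_reg_r with ((y+s)/y); auto. rewrite Rinv_l by lra. nra.
Qed.

Lemma factor_U s y : 1 <= s -> 0 < y -> y / (y + s) <= Rpower ((y + s - 1) / (y + s)) s.
Proof.
  intros Hs Hy.
  pose proof (bern s ((y+s-1)/(y+s)) Hs ltac:(apply Rdiv_lt_0_compat; lra)) as B.
  replace (1 + s * ((y+s-1)/(y+s) - 1)) with (y/(y+s)) in B by (field; lra). auto.
Qed.

Lemma ratio_L x s n : 1 <= s -> 0 < x ->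
  Rpower (x / (x + INR n + 1)) s <= rising_prod x n / rising_prod (x + s) n.
Proof.
  intros Hs Hx. induction n.
  - simpl. rewrite Rplus_0_r. apply factor_L; auto.
  - cbn [rising_prod]. rewrite S_INR.
    pose proof (pos_INR n).
    assert (Hr1 := rising_pos x n Hx). assert (Hr2 := rising_pos (x+s) n ltac:(lra)).
    replace (rising_prod x n * (x + (INR n + 1)) / (rising_prod (x + s) n * (x + s + (INR n + 1))))
      with (rising_prod x n / rising_prod (x + s) n * ((x + INR n + 1) / (x + INR n + 1 + s)))
      by (field; lra).
    replace (x / (x + (INR n + 1) + 1)) with ((x / (x + INR n + 1)) * ((x + INR n + 1) / (x + INR n + 1 + 1)))
      by (field; lra).
    rewrite <- Rpower_mult_distr by (apply Rdiv_lt_0_compat; lra).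
    apply Rmult_le_compat; try (left; apply Rpower_pos); auto.
    apply factor_L; auto. lra.
Qed.

Lemma ratio_U x s n : 1 <= s -> 0 < x ->
  rising_prod x n / rising_prod (x + s) n <= Rpower ((x + s - 1) / (x + s + INR n)) s.
Proof.
  intros Hs Hx. induction n.
  - simpl. rewrite Rplus_0_r. apply factor_U; auto.
  - cbn [rising_prod]. rewrite S_INR.
    pose proof (pos_INR n).
    assert (Hr1 := rising_pos x n Hx). assert (Hr2 := rising_pos (x+s) n ltac:(lra)).
    replace (rising_prod x n * (x + (INR n + 1)) / (rising_prod (x + s) n * (x + s + (INR n + 1))))
      with (rising_prod x n / rising_prod (x + s) n * ((x + INR n + 1) / (x + INR n + 1 + s)))
      by (field; lra).
    replace ((x + s - 1) / (x + s + (INR n + 1))) with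
      (((x + s - 1) / (x + s + INR n)) * ((x + INR n + 1 + s - 1) / (x + INR n + 1 + s)))
      by (field; lra).
    rewrite <- Rpower_mult_distr by (apply Rdiv_lt_0_compat; lra).
    apply Rmult_le_compat; auto.
    apply Rdiv_le_0_compat; [left; apply rising_pos | apply rising_pos]; lra.
    left; apply Rdiv_lt_0_compat; lra.
    apply factor_U; auto. lra.
Qed.

Lemma gauss_pos x n : 0 < x -> (1 <= n)%nat -> 0 < gauss_seq x n.
Proof.
  intros Hx Hn. unfold gauss_seq. apply Rdiv_lt_0_compat. apply Rmult_lt_0_compat.
  apply Rpower_pos. apply INR_fact_lt_0. apply rising_pos; auto.
Qed.

Lemma gauss_ratio x s n : 0 < x -> 0 <= s -> (1 <= n)%nat ->
  gauss_seq (x + s) n = gauss_seq x n * (Rpower (INR n) s * (rising_prod x n / rising_prod (x + s) n)).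
Proof.
  intros Hx Hs Hn. unfold gauss_seq. rewrite Rpower_plus.
  assert (Hr1 := rising_pos x n Hx).
  assert (Hr2 := rising_pos (x + s) n ltac:(lra)).
  field. lra.
Qed.

Lemma Gamma_ratio_L x s : 0 < x -> 1 <= s -> Gamma x * Rpower x s <= Gamma (x + s).
Proof.
  intros Hx Hs.
  destruct (Gamma_spec x Hx) as [G1 _]. destruct (Gamma_spec (x+s) ltac:(lra)) as [G2 _].
  apply Rle_cv_lim with
    (Un := fun n => gauss_seq x (n+1) * Rpower (x * ((INR n + 1) / (INR n + (x + 2)))) s)
    (Vn := fun n => gauss_seq (x + s) (n + 1)).
  - intro n. rewrite gauss_ratio by (auto; lra || lia).
    assert (HN: INR (n+1) = INR n + 1) by (rewrite plus_INR; simpl; ring).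
    pose proof (pos_INR n).
    apply Rmult_le_compat_l. left; apply gauss_pos; auto; lia.
    rewrite HN.
    replace (x * ((INR n + 1) / (INR n + (x + 2)))) with ((INR n + 1) * (x / (x + (INR n + 1) + 1)))
      by (field; lra).
    rewrite <- Rpower_mult_distr by (try apply Rdiv_lt_0_compat; lra).
    apply Rmult_le_compat_l. left; apply Rpower_pos.
    rewrite <- HN. apply ratio_L; auto.
  - apply CV_mult. apply CV_shift'. auto.
    apply continuity_seq with (f := fun z => Rpower z s). apply cont_Rpower; auto.
    eapply Un_cv_eq_lim. apply CV_mult. apply Un_cv_const. apply frac_cv. lra. ring.
  - apply CV_shift'. auto.
Qed.

Lemma Gamma_ratio_U x s : 0 < x -> 1 <= s -> Gamma (x + s) <= Gamma x * Rpower (x + s - 1) s.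
Proof.
  intros Hx Hs.
  destruct (Gamma_spec x Hx) as [G1 _]. destruct (Gamma_spec (x+s) ltac:(lra)) as [G2 _].
  apply Rle_cv_lim with
    (Vn := fun n => gauss_seq x (n+1) * Rpower ((x + s - 1) * ((INR n + 1) / (INR n + (x + s + 1)))) s)
    (Un := fun n => gauss_seq (x + s) (n + 1)).
  - intro n. rewrite gauss_ratio by (auto; lra || lia).
    assert (HN: INR (n+1) = INR n + 1) by (rewrite plus_INR; simpl; ring).
    pose proof (pos_INR n).
    apply Rmult_le_compat_l. left; apply gauss_pos; auto; lia.
    rewrite HN.
    replace ((x + s - 1) * ((INR n + 1) / (INR n + (x + s + 1)))) with
      ((INR n + 1) * ((x + s - 1) / (x + s + (INR n + 1)))) by (field; lra).
    rewrite <- Rpower_mult_distr by (try apply Rdiv_lt_0_compat; lra).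
    apply Rmult_le_compat_l. left; apply Rpower_pos.
    rewrite <- HN. apply ratio_U; auto.
  - apply CV_shift'. auto.
  - apply CV_mult. apply CV_shift'. auto.
    apply continuity_seq with (f := fun z => Rpower z s). apply cont_Rpower; lra.
    eapply Un_cv_eq_lim. apply CV_mult. apply Un_cv_const. apply frac_cv. lra. ring.
Qed.

Lemma Gamma_arg x y : x = y -> Gamma x = Gamma y.
Proof. intros ->; auto. Qed.

Lemma Gamma_pos x : 0 < x -> 0 < Gamma x.
Proof. intros. apply Gamma_spec; auto. Qed.

Definition c0 (a : R) : R := (1 + a) * Gamma (2 + a).

Lemma c0_pos a : 0 < a -> 0 < c0 a.
Proof. intros. unfold c0. apply Rmult_lt_0_compat. lra. apply Gamma_pos. lra. Qed.

Lemma pT_eq a j : pT a j = c0 a * Gamma (INR j + 1) / Gamma (INR j + 1 + (2 + a)).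
Proof. unfold pT, c0. f_equal. apply Gamma_arg. ring. Qed.

Lemma div_bound_aux c g G Rr : 0 < c -> 0 < g -> 0 < G -> 0 < Rr -> g * Rr <= G -> c * g / G <= c / Rr.
Proof.
  intros. unfold Rdiv. rewrite Rmult_assoc. apply Rmult_le_compat_l. lra.
  apply Rmult_le_reg_r with (G * Rr). nra.
  replace (g * / G * (G * Rr)) with (g * Rr) by (field; lra).
  replace (/ Rr * (G * Rr)) with G by (field; lra). auto.
Qed.

Lemma div_bound_aux2 c g G Rr : 0 < c -> 0 < g -> 0 < G -> 0 < Rr -> G <= g * Rr -> c / Rr <= c * g / G.
Proof.
  intros. unfold Rdiv. rewrite Rmult_assoc. apply Rmult_le_compat_l. lra.
  apply Rmult_le_reg_r with (G * Rr). nra.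
  replace (g * / G * (G * Rr)) with (g * Rr) by (field; lra).
  replace (/ Rr * (G * Rr)) with G by (field; lra). auto.
Qed.

Lemma pT_pos a j : 0 < a -> 0 < pT a j.
Proof.
  intros Ha. rewrite pT_eq. pose proof (pos_INR j).
  apply Rdiv_lt_0_compat. apply Rmult_lt_0_compat. apply c0_pos; auto. apply Gamma_pos; lra.
  apply Gamma_pos; lra.
Qed.

Lemma pT_upper a j : 0 < a -> pT a j <= c0 a / rp (INR j + 1) (2 + a).
Proof.
  intros Ha. rewrite pT_eq. pose proof (pos_INR j).
  rewrite rp_pos_eq by lra.
  apply div_bound_aux; try apply Gamma_pos; try apply c0_pos; try apply Rpower_pos; try lra.
  apply Gamma_ratio_L; lra.
Qed.

Lemma pT_lower a j : 0 < a -> c0 a / rp (INR j + (2 + a)) (2 + a) <= pT a j.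
Proof.
  intros Ha. rewrite pT_eq. pose proof (pos_INR j).
  rewrite rp_pos_eq by lra.
  apply div_bound_aux2; try apply Gamma_pos; try apply c0_pos; try apply Rpower_pos; try lra.
  replace (INR j + (2 + a)) with (INR j + 1 + (2 + a) - 1) by ring.
  apply Gamma_ratio_U; lra.
Qed.

Definition tau (a : R) (j : nat) : R := Gamma (INR j + 1) / Gamma (INR j + 2 + a).

Lemma Gamma_succ' x y : 0 < x -> y = x + 1 -> Gamma y = x * Gamma x.
Proof. intros. subst. apply Gamma_succ; auto. Qed.

Lemma pT_tele a j : 0 < a -> pT a j = Gamma (2 + a) * (tau a j - tau a (S j)).
Proof.
  intros Ha. unfold pT, tau. rewrite S_INR. pose proof (pos_INR j).
  rewrite (Gamma_succ' (INR j + 1) (INR j + 1 + 1)) by lra.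
  rewrite (Gamma_succ' (INR j + 2 + a) (INR j + 1 + 2 + a)) by lra.
  rewrite (Gamma_succ' (INR j + 2 + a) (3 + a + INR j)) by lra.
  pose proof (Gamma_pos (INR j + 1) ltac:(lra)).
  pose proof (Gamma_pos (INR j + 2 + a) ltac:(lra)).
  field. lra.
Qed.

Lemma tau_pos a j : 0 < a -> 0 < tau a j.
Proof. intros. unfold tau. pose proof (pos_INR j). apply Rdiv_lt_0_compat; apply Gamma_pos; lra. Qed.

Lemma tau_0 a : 0 < a -> tau a 0 = / Gamma (2 + a).
Proof.
  intros. unfold tau. simpl INR. rewrite Rplus_0_l, Gamma_1.
  replace (0 + 2 + a) with (2 + a) by ring. unfold Rdiv. ring.
Qed.

Lemma psum_eq a N : 0 < a -> sum_f_R0 (pT a) N = 1 - Gamma (2 + a) * tau a (S N).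
Proof.
  intros Ha. induction N.
  - simpl sum_f_R0. rewrite pT_tele, tau_0 by auto.
    pose proof (Gamma_pos (2 + a) ltac:(lra)). field. lra.
  - rewrite tech5, IHN, pT_tele by auto. ring.
Qed.

Lemma psum_le1 a N : 0 < a -> sum_f_R0 (pT a) N <= 1.
Proof.
  intros. rewrite psum_eq by auto. pose proof (tau_pos a (S N) H).
  pose proof (Gamma_pos (2+a) ltac:(lra)). nra.
Qed.

Lemma tau_bound a j : 0 < a -> tau a j <= / (INR j + 1).
Proof.
  intros Ha. unfold tau. pose proof (pos_INR j).
  pose proof (Gamma_pos (INR j + 1) ltac:(lra)).
  pose proof (Gamma_ratio_L (INR j + 1) (1 + a) ltac:(lra) ltac:(lra)) as H1.
  replace (INR j + 1 + (1 + a)) with (INR j + 2 + a) in H1 by ring.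
  assert (H2: INR j + 1 <= Rpower (INR j + 1) (1 + a)).
  { rewrite <- (Rpower_1 (INR j + 1)) at 1 by lra. apply Rle_Rpower; lra. }
  assert (H3: Gamma (INR j + 1) * (INR j + 1) <= Gamma (INR j + 2 + a)).
  { eapply Rle_trans; [|apply H1]. apply Rmult_le_compat_l; lra. }
  pose proof (Gamma_pos (INR j + 2 + a) ltac:(lra)).
  apply Rmult_le_reg_r with (Gamma (INR j + 2 + a) * (INR j + 1)). nra.
  replace (Gamma (INR j + 1) / Gamma (INR j + 2 + a) * (Gamma (INR j + 2 + a) * (INR j + 1)))
    with (Gamma (INR j + 1) * (INR j + 1)) by (field; lra).
  replace (/ (INR j + 1) * (Gamma (INR j + 2 + a) * (INR j + 1))) with (Gamma (INR j + 2 + a))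
    by (field; lra). auto.
Qed.

Lemma psum_ge a N : 0 < a -> 1 - Gamma (2 + a) / (INR N + 2) <= sum_f_R0 (pT a) N.
Proof.
  intros Ha. rewrite psum_eq by auto. pose proof (tau_bound a (S N) Ha).
  rewrite S_INR in H. pose proof (pos_INR N).
  pose proof (Gamma_pos (2+a) ltac:(lra)).
  replace (INR N + 1 + 1) with (INR N + 2) in H by ring.
  assert (Gamma (2 + a) * tau a (S N) <= Gamma (2 + a) * / (INR N + 2)) by (apply Rmult_le_compat_l; lra).
  unfold Rdiv. lra.
Qed.

Lemma psum_cv a : 0 < a -> Un_cv (sum_f_R0 (pT a)) 1.
Proof.
  intros Ha e He.
  pose proof (Gamma_pos (2+a) ltac:(lra)) as HG.
  destruct (INR_unbounded (Gamma (2 + a) / e)) as [N HN]. exists N. intros n Hn.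
  unfold Rdist. pose proof (psum_le1 a n Ha). pose proof (psum_ge a n Ha).
  apply le_INR in Hn.
  rewrite Rabs_left1 by lra.
  assert (Gamma (2 + a) / (INR n + 2) < e).
  { apply Rmult_lt_reg_r with (INR n + 2). pose proof (pos_INR n); lra.
    unfold Rdiv. rewrite Rmult_assoc, Rinv_l by (pose proof (pos_INR n); lra).
    assert (Gamma (2+a) < e * INR N).
    { apply Rmult_lt_reg_r with (/e). apply Rinv_0_lt_compat; auto.
      replace (e * INR N * / e) with (INR N) by (field; lra). unfold Rdiv in HN. lra. }
    nra. }
  lra.
Qed.

Definition nu (a : R) (j : nat) : R := Gamma (INR j + 2) / Gamma (INR j + 2 + a).

Lemma mom1_term a j : 0 < a -> INR j * pT a j <= c0 a / a * (nu a j - nu a (S j)).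
Proof.
  intros Ha. unfold nu. rewrite pT_eq. rewrite S_INR. pose proof (pos_INR j).
  rewrite (Gamma_succ' (INR j + 1) (INR j + 2)) by lra.
  rewrite (Gamma_succ' (INR j + 1 + 1) (INR j + 1 + 2)) by lra.
  rewrite (Gamma_succ' (INR j + 2 + a) (INR j + 1 + 2 + a)) by lra.
  rewrite (Gamma_succ' (INR j + 2 + a) (INR j + 1 + (2 + a))) by lra.
  rewrite (Gamma_succ' (INR j + 1) (INR j + 1 + 1)) by lra.
  pose proof (Gamma_pos (INR j + 1) ltac:(lra)).
  pose proof (Gamma_pos (INR j + 2 + a) ltac:(lra)).
  pose proof (c0_pos a Ha).
  replace (c0 a / a * ((INR j + 1) * Gamma (INR j + 1) / Gamma (INR j + 2 + a) -
      (INR j + 1 + 1) * ((INR j + 1) * Gamma (INR j + 1)) / ((INR j + 2 + a) * Gamma (INR j + 2 + a))))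
    with (c0 a * ((INR j + 1) * Gamma (INR j + 1)) / ((INR j + 2 + a) * Gamma (INR j + 2 + a)))
    by (field; lra).
  replace (INR j * (c0 a * Gamma (INR j + 1) / ((INR j + 2 + a) * Gamma (INR j + 2 + a))))
    with (c0 a * (INR j * Gamma (INR j + 1)) / ((INR j + 2 + a) * Gamma (INR j + 2 + a)))
    by (field; lra).
  unfold Rdiv. apply Rmult_le_compat_r. left; apply Rinv_0_lt_compat; nra.
  apply Rmult_le_compat_l; nra.
Qed.

Lemma nu_pos a j : 0 < a -> 0 < nu a j.
Proof. intros. unfold nu. pose proof (pos_INR j). apply Rdiv_lt_0_compat; apply Gamma_pos; lra. Qed.

Definition M1p (a : R) : R := (1 + a) / a.

Lemma mom1_p a N : 0 < a -> sum_f_R0 (fun j => INR j * pT a j) N <= M1p a.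
Proof.
  intros Ha.
  assert (H: forall N, sum_f_R0 (fun j => INR j * pT a j) N <= c0 a / a * (nu a 0 - nu a (S N))).
  { induction N0.
    - simpl sum_f_R0. exact (mom1_term a 0 Ha).
    - rewrite tech5. pose proof (mom1_term a (S N0) Ha). lra. }
  eapply Rle_trans. apply H.
  pose proof (nu_pos a (S N) Ha).
  assert (0 < c0 a / a) by (apply Rdiv_lt_0_compat; [apply c0_pos|]; auto).
  assert (E: c0 a / a * nu a 0 = M1p a).
  { unfold nu, c0, M1p. simpl INR. rewrite Rplus_0_l. rewrite Gamma_2.
    replace (0 + 2 + a) with (2 + a) by ring.
    pose proof (Gamma_pos (2+a) ltac:(lra)). field. split; lra. }
  nra.
Qed.

Definition Map (a : R) : R := 2 * c0 a.

Lemma moma_term a j : 0 < a -> rp (INR j) a * pT a j <= 2 * c0 a * (/ (INR j + 1) - / (INR j + 2)).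
Proof.
  intros Ha. pose proof (pos_INR j).
  pose proof (pT_upper a j Ha).
  pose proof (pT_pos a j Ha).
  assert (E: rp (INR j + 1) (2 + a) = rp (INR j + 1) a * ((INR j + 1) * (INR j + 1))).
  { replace (2 + a) with (a + 2) by ring. rewrite rp_plus, rp_pow2; lra. }
  pose proof (rp_pos (INR j + 1) a ltac:(lra)).
  assert (Hm: rp (INR j) a <= rp (INR j + 1) a) by (apply rp_mono; lra).
  pose proof (rp_nonneg (INR j) a).
  pose proof (c0_pos a Ha).
  apply Rle_trans with (rp (INR j + 1) a * (c0 a / rp (INR j + 1) (2 + a))).
  apply Rmult_le_compat; lra.
  rewrite E.
  replace (rp (INR j + 1) a * (c0 a / (rp (INR j + 1) a * ((INR j + 1) * (INR j + 1)))))
    with (c0 a / ((INR j + 1) * (INR j + 1))) by (field; lra).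
  replace (2 * c0 a * (/ (INR j + 1) - / (INR j + 2))) with (c0 a * 2 / ((INR j + 1) * (INR j + 2)))
    by (field; lra).
  unfold Rdiv. rewrite Rmult_assoc. apply Rmult_le_compat_l. lra.
  apply Rmult_le_reg_r with ((INR j + 1) * (INR j + 1) * (INR j + 2)). nra.
  replace (/ ((INR j + 1) * (INR j + 1)) * ((INR j + 1) * (INR j + 1) * (INR j + 2))) with (INR j + 2)
    by (field; lra).
  replace (2 * / ((INR j + 1) * (INR j + 2)) * ((INR j + 1) * (INR j + 1) * (INR j + 2)))
    with (2 * (INR j + 1)) by (field; lra). lra.
Qed.

Lemma moma_p a N : 0 < a -> sum_f_R0 (fun j => rp (INR j) a * pT a j) N <= Map a.
Proof.
  intros Ha.
  assert (H: forall N, sum_f_R0 (fun j => rp (INR j) a * pT a j) N <= 2 * c0 a * (1 - / (INR N + 2))).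
  { induction N0.
    - simpl sum_f_R0. pose proof (moma_term a 0 Ha). simpl INR in *.
      replace (0 + 1) with 1 in H by ring. rewrite Rinv_1 in H. lra.
    - rewrite tech5. pose proof (moma_term a (S N0) Ha). rewrite S_INR in *.
      replace (INR N0 + 1 + 1) with (INR N0 + 2) in H by ring. lra. }
  eapply Rle_trans. apply H. unfold Map. pose proof (c0_pos a Ha).
  pose proof (pos_INR N). assert (0 < / (INR N + 2)) by (apply Rinv_0_lt_compat; lra). nra.
Qed.

Lemma sum_scal_l (f : nat -> R) c N : sum_f_R0 (fun j => c * f j) N = c * sum_f_R0 f N.
Proof. induction N; simpl; [ring|]. rewrite IHN. ring. Qed.

Lemma harm_up n : sum_f_R0 (fun j => / (INR j + 1)) n <= 1 + ln (INR n + 1).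
Proof.
  induction n.
  - simpl. rewrite Rplus_0_l, Rinv_1, ln_1. lra.
  - rewrite tech5, S_INR. pose proof (pos_INR n).
    assert (/ (INR n + 1 + 1) <= ln (INR n + 1 + 1) - ln (INR n + 1)).
    { rewrite <- ln_div' by lra.
      pose proof (ln_1p_le (- / (INR n + 1 + 1))) as H1.
      assert (0 < / (INR n + 1 + 1)) by (apply Rinv_0_lt_compat; lra).
      assert (/ (INR n + 1 + 1) < 1) by (rewrite <- Rinv_1; apply Rinv_lt_contravar; lra).
      specialize (H1 ltac:(lra)).
      replace (1 + - / (INR n + 1 + 1)) with (/ ((INR n + 1 + 1) / (INR n + 1))) in H1 by (field; lra).
      rewrite ln_Rinv in H1 by (apply Rdiv_lt_0_compat; lra). lra. }
    lra.
Qed.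

Lemma harm_low beta n : 0 < beta ->
  ln (INR n + 1 + beta) - ln beta <= sum_f_R0 (fun j => / (INR j + beta)) n.
Proof.
  intros Hb. induction n.
  - simpl. rewrite !Rplus_0_l. rewrite <- ln_div' by lra.
    replace ((1 + beta) / beta) with (1 + / beta) by (field; lra).
    apply ln_1p_le. assert (0 < / beta) by (apply Rinv_0_lt_compat; lra). lra.
  - rewrite tech5, S_INR. pose proof (pos_INR n).
    assert (ln (INR n + 1 + 1 + beta) - ln (INR n + 1 + beta) <= / (INR n + 1 + beta)).
    { rewrite <- ln_div' by lra.
      replace ((INR n + 1 + 1 + beta) / (INR n + 1 + beta)) with (1 + / (INR n + 1 + beta)) by (field; lra).
      apply ln_1p_le. assert (0 < / (INR n + 1 + beta)) by (apply Rinv_0_lt_compat; lra). lra. }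
    lra.
Qed.

Lemma sq_sum beta n : 1 < beta ->
  sum_f_R0 (fun j => / ((INR j + beta) * (INR j + beta))) n <= / (beta - 1).
Proof.
  intros Hb.
  assert (H: forall n, sum_f_R0 (fun j => / ((INR j + beta) * (INR j + beta))) n
                       <= / (beta - 1) - / (INR n + beta)).
  { induction n0.
    - simpl. rewrite Rplus_0_l.
      replace (/ (beta - 1) - / beta) with (/ ((beta - 1) * beta)) by (field; lra).
      apply Rinv_le_contravar; nra.
    - rewrite tech5, S_INR. pose proof (pos_INR n0).
      assert (/ ((INR n0 + 1 + beta) * (INR n0 + 1 + beta)) <= / (INR n0 + beta) - / (INR n0 + 1 + beta)).
      { replace (/ (INR n0 + beta) - / (INR n0 + 1 + beta)) with (/ ((INR n0 + beta) * (INR n0 + 1 + beta)))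
          by (field; lra).
        apply Rinv_le_contravar; nra. }
      lra. }
  eapply Rle_trans. apply H. pose proof (pos_INR n).
  assert (0 < / (INR n + beta)) by (apply Rinv_0_lt_compat; lra). lra.
Qed.

Lemma F1_term_up a j : 0 < a -> rp (INR j) (1 + a) * pT a j <= c0 a / (INR j + 1).
Proof.
  intros Ha. pose proof (pos_INR j).
  pose proof (pT_upper a j Ha). pose proof (pT_pos a j Ha).
  assert (E: rp (INR j + 1) (2 + a) = rp (INR j + 1) (1 + a) * (INR j + 1)).
  { replace (2 + a) with ((1 + a) + 1) by ring. rewrite rp_plus, rp_1; lra. }
  pose proof (rp_pos (INR j + 1) (1 + a) ltac:(lra)).
  assert (Hm: rp (INR j) (1 + a) <= rp (INR j + 1) (1 + a)) by (apply rp_mono; lra).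
  pose proof (rp_nonneg (INR j) (1 + a)). pose proof (c0_pos a Ha).
  apply Rle_trans with (rp (INR j + 1) (1 + a) * (c0 a / rp (INR j + 1) (2 + a))).
  apply Rmult_le_compat; lra.
  rewrite E. right. field. lra.
Qed.

Lemma F1_term_low a j : 0 < a ->
  c0 a * (/ (INR j + (2 + a)) - (1 + a) * (2 + a) / ((INR j + (2 + a)) * (INR j + (2 + a))))
  <= rp (INR j) (1 + a) * pT a j.
Proof.
  intros Ha. pose proof (pos_INR j). pose proof (c0_pos a Ha).
  destruct j as [|j].
  - simpl INR. rewrite rp_0, Rmult_0_l, Rplus_0_l.
    replace (/ (2 + a) - (1 + a) * (2 + a) / ((2 + a) * (2 + a))) with (- a / (2 + a)) by (field; lra).
    assert (0 <= a / (2 + a)) by (apply Rdiv_le_0_compat; lra).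
    unfold Rdiv in *. nra.
  - set (J := INR (S j)) in *.
    assert (HJ: 0 < J) by (apply INR_S_pos).
    pose proof (pT_lower a (S j) Ha). fold J in H1.
    rewrite rp_pos_eq in * by lra.
    assert (E: Rpower (J + (2 + a)) (2 + a) = Rpower (J + (2 + a)) (1 + a) * (J + (2 + a))).
    { replace (2 + a) with ((1 + a) + 1) at 2 by ring. rewrite Rpower_plus, Rpower_1; lra. }
    pose proof (bern (1 + a) (J / (J + (2 + a))) ltac:(lra) ltac:(apply Rdiv_lt_0_compat; lra)) as B.
    rewrite <- (Rmult_1_l (Rpower (J / (J + (2 + a))) (1 + a))) in B.
    assert (Hq: Rpower (J / (J + (2 + a))) (1 + a) = Rpower J (1 + a) / Rpower (J + (2 + a)) (1 + a)).
    { unfold Rdiv. rewrite <- Rpower_mult_distr by (try apply Rinv_0_lt_compat; lra).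
      f_equal. rewrite <- Rpower_Ropp. unfold Rpower. rewrite ln_Rinv by lra. f_equal; ring. }
    rewrite Rmult_1_l, Hq in B.
    apply Rle_trans with (Rpower J (1 + a) * (c0 a / Rpower (J + (2 + a)) (2 + a))).
    2: { apply Rmult_le_compat_l. left; apply Rpower_pos. auto. }
    rewrite E.
    pose proof (Rpower_pos (J + (2 + a)) (1 + a)).
    replace (Rpower J (1 + a) * (c0 a / (Rpower (J + (2 + a)) (1 + a) * (J + (2 + a)))))
      with (c0 a / (J + (2 + a)) * (Rpower J (1 + a) / Rpower (J + (2 + a)) (1 + a))) by (field; lra).
    replace (c0 a * (/ (J + (2 + a)) - (1 + a) * (2 + a) / ((J + (2 + a)) * (J + (2 + a)))))
      with (c0 a / (J + (2 + a)) * (1 + (1 + a) * (J / (J + (2 + a)) - 1))) by (field; lra).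
    apply Rmult_le_compat_l. apply Rdiv_le_0_compat; lra. auto.
Qed.

Definition F1 (a : R) (N : nat) : R := sum_f_R0 (fun j => rp (INR j) (1 + a) * pT a j) N.

Lemma F1_up a N : 0 < a -> F1 a N <= c0 a * ln (INR N + 1) + c0 a.
Proof.
  intros Ha. unfold F1.
  apply Rle_trans with (sum_f_R0 (fun j => c0 a * / (INR j + 1)) N).
  apply sum_Rle. intros. apply F1_term_up; auto.
  rewrite sum_scal_l. pose proof (harm_up N). pose proof (c0_pos a Ha). nra.
Qed.

Lemma F1_low a N : 0 < a -> c0 a * ln (INR N + 1) - c0 a * (ln (2 + a) + (2 + a)) <= F1 a N.
Proof.
  intros Ha. unfold F1.
  eapply Rle_trans; [|apply sum_Rle; intros; apply F1_term_low; auto].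
  rewrite sum_scal_l.
  replace (sum_f_R0 (fun i => / (INR i + (2 + a)) - (1 + a) * (2 + a) / ((INR i + (2 + a)) * (INR i + (2 + a)))) N)
    with (sum_f_R0 (fun i => / (INR i + (2 + a))) N -
          (1 + a) * (2 + a) * sum_f_R0 (fun i => / ((INR i + (2 + a)) * (INR i + (2 + a)))) N).
  2: { rewrite <- sum_scal_l, <- minus_sum. apply sum_eq. intros. unfold Rdiv. ring. }
  pose proof (harm_low (2 + a) N ltac:(lra)).
  pose proof (sq_sum (2 + a) N ltac:(lra)).
  replace (/ (2 + a - 1)) with (/ (1 + a)) in H0 by (f_equal; ring).
  pose proof (pos_INR N).
  assert (ln (INR N + 1) <= ln (INR N + 1 + (2 + a))) by (apply ln_le_mono; lra).
  assert ((1 + a) * (2 + a) * sum_f_R0 (fun i => / ((INR i + (2 + a)) * (INR i + (2 + a)))) N <= 2 + a).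
  { replace (2 + a) with ((1 + a) * (2 + a) * / (1 + a)) at 2 by (field; lra).
    apply Rmult_le_compat_l. nra. auto. }
  pose proof (c0_pos a Ha). nra.
Qed.

Lemma sum_add (f g : nat -> R) N : sum_f_R0 (fun j => f j + g j) N = sum_f_R0 f N + sum_f_R0 g N.
Proof. induction N; simpl; [ring|]. rewrite IHN. ring. Qed.

Lemma sum_scal_r (f : nat -> R) c N : sum_f_R0 (fun j => f j * c) N = sum_f_R0 f N * c.
Proof. induction N; simpl; [ring|]. rewrite IHN. ring. Qed.

Lemma sum_zero (f : nat -> R) N : (forall j, (j <= N)%nat -> f j = 0) -> sum_f_R0 f N = 0.
Proof.
  intros H. induction N; simpl. apply H; lia. rewrite IHN, H. ring. lia. intros; apply H; lia.
Qed.

Lemma sum_nonneg (f : nat -> R) N : (forall j, (j <= N)%nat -> 0 <= f j) -> 0 <= sum_f_R0 f N.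
Proof.
  intros H. induction N; simpl. apply H; lia.
  assert (0 <= sum_f_R0 f N) by (apply IHN; intros; apply H; lia).
  specialize (H (S N) ltac:(lia)). lra.
Qed.

Lemma sum_mono_N (f : nat -> R) n N : (forall j, 0 <= f j) -> (n <= N)%nat -> sum_f_R0 f n <= sum_f_R0 f N.
Proof.
  intros H Hn. induction Hn. lra. simpl. specialize (H (S m)). lra.
Qed.

Lemma conv_nonneg a m z : 0 < a -> 0 <= conv a m z.
Proof.
  intros Ha. revert z. induction m; intros z; simpl.
  - destruct (Nat.eqb z 0); lra.
  - apply sum_nonneg. intros. apply Rmult_le_pos. left; apply pT_pos; auto. apply IHm.
Qed.

Lemma conv_1 a z : conv a 1 z = pT a z.
Proof.
  simpl. destruct z.
  - simpl. ring.
  - rewrite tech5. rewrite sum_zero.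
    + rewrite Nat.sub_diag. simpl. ring.
    + intros j Hj. replace (S z - j)%nat with (S (z - j)) by lia. simpl. ring.
Qed.

Lemma triangle (g : nat -> nat -> R) i :
  sum_f_R0 (fun z => sum_f_R0 (fun j => g j (z - j)%nat) z) i =
  sum_f_R0 (fun j => sum_f_R0 (fun r => g j r) (i - j)) i.
Proof.
  induction i.
  - simpl. auto.
  - rewrite tech5, IHi. rewrite (tech5 (fun j => sum_f_R0 (fun r => g j r) (S i - j))).
    rewrite Nat.sub_diag.
    rewrite (sum_eq (fun j => sum_f_R0 (fun r => g j r) (S i - j)%nat)
               (fun j => sum_f_R0 (fun r => g j r) (i - j) + g j (S i - j)%nat) i).
    + rewrite sum_add. rewrite tech5. rewrite Nat.sub_diag. simpl. ring.
    + intros j Hj. replace (S i - j)%nat with (S (i - j)) by lia. rewrite tech5. auto.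
Qed.

Lemma conv_sum a m i (w : nat -> R) :
  sum_f_R0 (fun z => conv a (S m) z * w z) i =
  sum_f_R0 (fun j => pT a j * sum_f_R0 (fun r => conv a m r * w (j + r)%nat) (i - j)) i.
Proof.
  transitivity (sum_f_R0 (fun z => sum_f_R0 (fun j => (fun j r => pT a j * (conv a m r * w (j + r)%nat)) j (z - j)%nat) z) i).
  - apply sum_eq. intros z Hz. simpl conv. rewrite <- sum_scal_r. apply sum_eq.
    intros j Hj. replace (j + (z - j))%nat with z by lia. ring.
  - rewrite (triangle (fun j r => pT a j * (conv a m r * w (j + r)%nat))). apply sum_eq. intros j Hj. rewrite sum_scal_l. auto.
Qed.

Definition Qm a m i := sum_f_R0 (fun z => conv a m z) i.
Definition Fm a m i := sum_f_R0 (fun z => conv a m z * rp (INR z) (1 + a)) i.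
Definition M1m a m i := sum_f_R0 (fun z => conv a m z * INR z) i.
Definition Mam a m i := sum_f_R0 (fun z => conv a m z * rp (INR z) a) i.

Lemma conv_sum_bound a i (X : nat -> R) B : 0 < a -> 0 <= B -> (forall r, X r <= B) ->
  sum_f_R0 (fun j => pT a j * X (i - j)%nat) i <= B.
Proof.
  intros Ha HB HX.
  apply Rle_trans with (sum_f_R0 (fun j => pT a j * B) i).
  apply sum_Rle. intros. apply Rmult_le_compat_l. left; apply pT_pos; auto. auto.
  rewrite sum_scal_r. pose proof (psum_le1 a i Ha).
  pose proof (sum_nonneg (pT a) i ltac:(intros; left; apply pT_pos; auto)). nra.
Qed.

Lemma Qm_le1 a m i : 0 < a -> Qm a m i <= 1.
Proof.
  intros Ha. revert i. induction m; intros i.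
  - unfold Qm. induction i. simpl. lra. rewrite tech5. simpl conv at 2. simpl Nat.eqb. lra.
  - unfold Qm. rewrite <- (sum_eq (fun z => conv a (S m) z * 1)) by (intros; ring).
    rewrite conv_sum. apply conv_sum_bound; auto. lra.
    intros r. rewrite sum_eq with (Bn := fun z => conv a m z) by (intros; ring). apply IHm.
Qed.

Definition Cp (a : R) : R := Rpower 2 (1 + a) - 1.

Lemma Cp_ge1 a : 0 < a -> 1 <= Cp a.
Proof. intros. unfold Cp. pose proof (Rpower2_ge (1 + a) ltac:(lra)). lra. Qed.

Lemma rp_sum_a a x y : 0 <= a -> 0 <= x -> 0 <= y -> rp (x + y) a <= Rpower 2 a * (rp x a + rp y a).
Proof.
  intros Ha Hx Hy. pose proof (rp_nonneg x a). pose proof (rp_nonneg y a).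
  assert (H2: rp 2 a = Rpower 2 a) by (apply rp_pos_eq; lra).
  assert (0 < Rpower 2 a) by apply Rpower_pos.
  destruct (Rle_dec x y).
  - apply Rle_trans with (rp (2 * y) a). apply rp_mono; lra.
    rewrite rp_mult, H2 by lra. nra.
  - apply Rle_trans with (rp (2 * x) a). apply rp_mono; lra.
    rewrite rp_mult, H2 by lra. nra.
Qed.

Lemma conv_sum_bound' a i (X : nat -> R) B : 0 < a -> 0 <= B -> (forall r, (r <= i)%nat -> X r <= B) ->
  sum_f_R0 (fun j => pT a j * X (i - j)%nat) i <= B.
Proof.
  intros Ha HB HX.
  apply Rle_trans with (sum_f_R0 (fun j => pT a j * B) i).
  apply sum_Rle. intros. apply Rmult_le_compat_l. left; apply pT_pos; auto. apply HX; lia.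
  rewrite sum_scal_r. pose proof (psum_le1 a i Ha).
  pose proof (sum_nonneg (pT a) i ltac:(intros; left; apply pT_pos; auto)). nra.
Qed.

Lemma conv_sum_bound2 a i (X : nat -> R) (Y : nat -> R) B : 0 < a -> 0 <= B ->
  (forall j, 0 <= Y j) -> (forall r, X r <= B) ->
  sum_f_R0 (fun j => pT a j * (Y j * X (i - j)%nat)) i <= B * sum_f_R0 (fun j => Y j * pT a j) i.
Proof.
  intros Ha HB HY HX. rewrite <- sum_scal_l. apply sum_Rle. intros j Hj.
  pose proof (pT_pos a j Ha). specialize (HY j). specialize (HX (i - j)%nat).
  replace (B * (Y j * pT a j)) with (pT a j * (Y j * B)) by ring.
  apply Rmult_le_compat_l. lra. apply Rmult_le_compat_l; lra.
Qed.

Lemma M1_step a m i B : 0 < a -> 0 <= B -> (forall n, M1m a m n <= B) -> M1m a (S m) i <= M1p a + B.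
Proof.
  intros Ha HB HM. unfold M1m. rewrite conv_sum.
  rewrite (sum_eq _ (fun j => pT a j * (INR j * Qm a m (i - j)%nat) + pT a j * M1m a m (i - j)%nat)).
  - rewrite sum_add. apply Rplus_le_compat.
    + apply Rle_trans with (1 * sum_f_R0 (fun j => INR j * pT a j) i).
      apply conv_sum_bound2; auto. lra. intros; apply pos_INR. intros. apply Qm_le1; auto.
      rewrite Rmult_1_l. apply mom1_p; auto.
    + apply conv_sum_bound'; auto.
  - intros j Hj. unfold Qm, M1m. rewrite <- Rmult_plus_distr_l. f_equal.
    rewrite <- sum_scal_l, <- sum_add. apply sum_eq. intros. rewrite plus_INR. ring.
Qed.

Lemma Ma_step a m i B : 0 < a -> 0 <= B -> (forall n, Mam a m n <= B) ->
  Mam a (S m) i <= Rpower 2 a * (Map a + B).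
Proof.
  intros Ha HB HM. unfold Mam. rewrite conv_sum.
  apply Rle_trans with (sum_f_R0 (fun j => Rpower 2 a * (pT a j * (rp (INR j) a * Qm a m (i - j)%nat)) +
                                            Rpower 2 a * (pT a j * Mam a m (i - j)%nat)) i).
  - apply sum_Rle. intros j Hj.
    replace (Rpower 2 a * (pT a j * (rp (INR j) a * Qm a m (i - j))) + Rpower 2 a * (pT a j * Mam a m (i - j)))
      with (pT a j * (Rpower 2 a * (rp (INR j) a * Qm a m (i - j)%nat + Mam a m (i - j)%nat))) by ring.
    apply Rmult_le_compat_l. left; apply pT_pos; auto.
    unfold Qm, Mam. rewrite <- (sum_scal_l _ (rp (INR j) a)), <- sum_add, <- sum_scal_l. apply sum_Rle. intros r Hr.
    rewrite plus_INR. pose proof (conv_nonneg a m r Ha). pose proof (pos_INR j). pose proof (pos_INR r).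
    pose proof (rp_sum_a a (INR j) (INR r) ltac:(lra) H0 H1).
    pose proof (Rpower_pos 2 a).
    replace (Rpower 2 a * (rp (INR j) a * conv a m r + conv a m r * rp (INR r) a))
      with (conv a m r * (Rpower 2 a * (rp (INR j) a + rp (INR r) a))) by ring.
    apply Rmult_le_compat_l; lra.
  - rewrite sum_add, sum_scal_l, sum_scal_l. pose proof (Rpower_pos 2 a).
    rewrite <- Rmult_plus_distr_l. apply Rmult_le_compat_l. lra.
    apply Rplus_le_compat.
    + apply Rle_trans with (1 * sum_f_R0 (fun j => rp (INR j) a * pT a j) i).
      apply conv_sum_bound2; auto. lra. intros; apply rp_nonneg. intros; apply Qm_le1; auto.
      rewrite Rmult_1_l. apply moma_p; auto.
    + apply conv_sum_bound'; auto.
Qed.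

Lemma inner_up a m j n : 0 < a ->
  sum_f_R0 (fun r => conv a m r * rp (INR (j + r)) (1 + a)) n <=
  rp (INR j) (1 + a) * Qm a m n + Fm a m n + Cp a * (rp (INR j) a * M1m a m n + INR j * Mam a m n).
Proof.
  intros Ha. unfold Qm, Fm, M1m, Mam.
  apply Rle_trans with (sum_f_R0 (fun r => (rp (INR j) (1 + a) * conv a m r + conv a m r * rp (INR r) (1 + a)) +
     Cp a * (rp (INR j) a * (conv a m r * INR r) + INR j * (conv a m r * rp (INR r) a))) n).
  2: { rewrite !sum_add, !sum_scal_l, !sum_add, !sum_scal_l. apply Rle_refl. }
  apply sum_Rle. intros r Hr. rewrite plus_INR.
  pose proof (conv_nonneg a m r Ha). pose proof (pos_INR j). pose proof (pos_INR r).
  pose proof (upperadd (1 + a) (INR j) (INR r) ltac:(lra) H0 H1) as U.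
  replace (1 + a - 1) with a in U by ring. fold (Cp a) in U.
  replace (rp (INR j) (1 + a) * conv a m r + conv a m r * rp (INR r) (1 + a) +
           Cp a * (rp (INR j) a * (conv a m r * INR r) + INR j * (conv a m r * rp (INR r) a)))
    with (conv a m r * (rp (INR j) (1 + a) + rp (INR r) (1 + a) +
           Cp a * (INR r * rp (INR j) a + INR j * rp (INR r) a))) by ring.
  apply Rmult_le_compat_l; lra.
Qed.

Lemma F_step a m i X B1 Ba : 0 < a -> 0 <= X -> 0 <= B1 -> 0 <= Ba ->
  (forall n, (n <= i)%nat -> Fm a m n <= X) -> (forall n, M1m a m n <= B1) -> (forall n, Mam a m n <= Ba) ->
  Fm a (S m) i <= F1 a i + X + Cp a * (Map a * B1 + M1p a * Ba).
Proof.
  intros Ha HX HB1 HBa HF HM1 HMa. unfold Fm at 1. rewrite conv_sum.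
  pose proof (Cp_ge1 a Ha) as HC.
  apply Rle_trans with (sum_f_R0 (fun j => pT a j * (rp (INR j) (1 + a) * Qm a m (i - j)%nat) +
     pT a j * Fm a m (i - j)%nat + Cp a * (pT a j * (rp (INR j) a * M1m a m (i - j)%nat)) +
     Cp a * (pT a j * (INR j * Mam a m (i - j)%nat))) i).
  - apply sum_Rle. intros j Hj. pose proof (inner_up a m j (i - j) Ha). pose proof (pT_pos a j Ha).
    replace (pT a j * (rp (INR j) (1 + a) * Qm a m (i - j)) + pT a j * Fm a m (i - j) +
       Cp a * (pT a j * (rp (INR j) a * M1m a m (i - j))) + Cp a * (pT a j * (INR j * Mam a m (i - j))))
      with (pT a j * (rp (INR j) (1 + a) * Qm a m (i - j) + Fm a m (i - j) +
            Cp a * (rp (INR j) a * M1m a m (i - j) + INR j * Mam a m (i - j)))) by ring.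
    apply Rmult_le_compat_l; lra.
  - rewrite !sum_add, !sum_scal_l.
    assert (A1: sum_f_R0 (fun j => pT a j * (rp (INR j) (1 + a) * Qm a m (i - j)%nat)) i <= F1 a i).
    { apply Rle_trans with (1 * sum_f_R0 (fun j => rp (INR j) (1 + a) * pT a j) i).
      apply conv_sum_bound2; auto. lra. intros; apply rp_nonneg. intros; apply Qm_le1; auto.
      rewrite Rmult_1_l. unfold F1. lra. }
    assert (A2: sum_f_R0 (fun j => pT a j * Fm a m (i - j)%nat) i <= X).
    { apply conv_sum_bound'; auto. }
    assert (A3: sum_f_R0 (fun j => pT a j * (rp (INR j) a * M1m a m (i - j)%nat)) i <= Map a * B1).
    { eapply Rle_trans. apply (conv_sum_bound2 a i (M1m a m) (fun j => rp (INR j) a) B1);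
        [auto | auto | intros; apply rp_nonneg | auto].
      rewrite Rmult_comm. apply Rmult_le_compat_r; auto. apply moma_p; auto. }
    assert (A4: sum_f_R0 (fun j => pT a j * (INR j * Mam a m (i - j)%nat)) i <= M1p a * Ba).
    { eapply Rle_trans. apply (conv_sum_bound2 a i (Mam a m) INR Ba);
        [auto | auto | intros; apply pos_INR | auto].
      rewrite Rmult_comm. apply Rmult_le_compat_r; auto. apply mom1_p; auto. }
    nra.
Qed.

Definition Kc (a : R) : R := 2 + M1p a + Map a + c0 a + 2 * Rpower 2 a + Cp a * (Map a + M1p a).

Lemma M1p_pos a : 0 < a -> 0 < M1p a.
Proof. intros. unfold M1p. apply Rdiv_lt_0_compat; lra. Qed.
Lemma Map_pos a : 0 < a -> 0 < Map a.
Proof. intros. unfold Map. pose proof (c0_pos a H). lra. Qed.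

Lemma Kc_facts a : 0 < a ->
  2 <= Kc a /\ M1p a + 1 <= Kc a /\ Map a <= Kc a /\ c0 a <= Kc a /\ 2 * Rpower 2 a <= Kc a /\
  2 + Cp a * (Map a + M1p a) <= Kc a.
Proof.
  intros Ha. unfold Kc. pose proof (M1p_pos a Ha). pose proof (Map_pos a Ha). pose proof (c0_pos a Ha).
  pose proof (Rpower_pos 2 a). pose proof (Cp_ge1 a Ha).
  assert (0 <= Cp a * (Map a + M1p a)) by (apply Rmult_le_pos; lra).
  repeat split; lra.
Qed.

Lemma pow_ge K n : 1 <= K -> K <= K ^ (S n).
Proof.
  intros HK. induction n. simpl. lra. simpl in *. nra.
Qed.

Lemma ln_i1_nonneg i : 0 <= ln (INR i + 1).
Proof. pose proof (pos_INR i). rewrite <- ln_1. apply ln_le_mono; lra. Qed.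

Lemma bounds a m : 0 < a -> forall i,
  M1m a (S m) i <= Kc a ^ (S m) /\ Mam a (S m) i <= Kc a ^ (S m) /\
  Fm a (S m) i <= INR (S m) * c0 a * ln (INR i + 1) + Kc a ^ (S m).
Proof.
  intros Ha. destruct (Kc_facts a Ha) as [K2 [K3 [K4 [K5 [K6 K7]]]]].
  pose proof (M1p_pos a Ha). pose proof (Map_pos a Ha). pose proof (c0_pos a Ha).
  induction m; intros i.
  - simpl pow. rewrite Rmult_1_r. simpl INR. rewrite Rmult_1_l.
    assert (E1: M1m a 1 i = sum_f_R0 (fun z => INR z * pT a z) i)
      by (apply sum_eq; intros; rewrite conv_1; ring).
    assert (E2: Mam a 1 i = sum_f_R0 (fun z => rp (INR z) a * pT a z) i)
      by (apply sum_eq; intros; rewrite conv_1; ring).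
    assert (E3: Fm a 1 i = F1 a i)
      by (apply sum_eq; intros; rewrite conv_1; ring).
    rewrite E1, E2, E3.
    repeat split.
    + pose proof (mom1_p a i Ha). lra.
    + pose proof (moma_p a i Ha). lra.
    + pose proof (F1_up a i Ha). lra.
  - set (Kp := Kc a ^ (S m)).
    assert (HKp: Kc a <= Kp) by (apply pow_ge; lra).
    assert (E: Kc a ^ (S (S m)) = Kc a * Kp) by (unfold Kp; simpl; ring).
    rewrite E.
    assert (HM1: forall n, M1m a (S m) n <= Kp) by (intros; apply IHm).
    assert (HMa: forall n, Mam a (S m) n <= Kp) by (intros; apply IHm).
    repeat split.
    + eapply Rle_trans. apply M1_step; auto. lra. nra.
    + eapply Rle_trans. apply Ma_step; auto. lra. pose proof (Rpower_pos 2 a). nra.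
    + eapply Rle_trans. apply (F_step a (S m) i (INR (S m) * c0 a * ln (INR i + 1) + Kp) Kp Kp); auto.
      * pose proof (ln_i1_nonneg i). pose proof (pos_INR (S m)).
        assert (0 <= INR (S m) * c0 a * ln (INR i + 1)) by (apply Rmult_le_pos; [apply Rmult_le_pos|]; lra).
        lra.
      * lra.
      * lra.
      * intros n Hn. eapply Rle_trans. apply IHm. apply Rplus_le_compat_r.
        apply Rmult_le_compat_l. pose proof (pos_INR (S m)). apply Rmult_le_pos; lra.
        apply ln_le_mono. pose proof (pos_INR n); lra. apply le_INR in Hn. lra.
      * pose proof (F1_up a i Ha). rewrite (S_INR (S m)).
        pose proof (ln_i1_nonneg i).
        assert (Cp a * (Map a * Kp + M1p a * Kp) = Cp a * (Map a + M1p a) * Kp) by ring.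
        assert (c0 a <= Kp) by lra.
        assert ((2 + Cp a * (Map a + M1p a)) * Kp <= Kc a * Kp) by (apply Rmult_le_compat_r; lra).
        nra.
Qed.

Lemma Qm_0 a k : Qm a 0 k = 1.
Proof. unfold Qm. induction k. simpl. auto. rewrite tech5, IHk. simpl. ring. Qed.

Lemma Qm_nonneg a m k : 0 < a -> 0 <= Qm a m k.
Proof. intros. unfold Qm. apply sum_nonneg. intros; apply conv_nonneg; auto. Qed.

Lemma Fm_nonneg a m k : 0 < a -> 0 <= Fm a m k.
Proof. intros. unfold Fm. apply sum_nonneg. intros; apply Rmult_le_pos; [apply conv_nonneg; auto|apply rp_nonneg]. Qed.

Lemma Fm_mono a m n N : 0 < a -> (n <= N)%nat -> Fm a m n <= Fm a m N.
Proof. intros. unfold Fm. apply sum_mono_N; auto. intros; apply Rmult_le_pos; [apply conv_nonneg; auto|apply rp_nonneg]. Qed.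

Lemma Qm_rec a m i : Qm a (S m) i = sum_f_R0 (fun j => pT a j * Qm a m (i - j)%nat) i.
Proof.
  unfold Qm. rewrite <- (sum_eq (fun z => conv a (S m) z * 1)) by (intros; ring).
  rewrite conv_sum. apply sum_eq. intros. f_equal. apply sum_eq. intros; ring.
Qed.

Lemma psum_large a d : 0 < a -> 0 < d -> exists N, forall n, (N <= n)%nat -> 1 - d <= sum_f_R0 (pT a) n.
Proof.
  intros Ha Hd. destruct (psum_cv a Ha d Hd) as [N HN]. exists N. intros n Hn.
  specialize (HN n Hn). unfold Rdist in HN. apply Rabs_def2 in HN. lra.
Qed.

Lemma Qm_cv a m : 0 < a -> forall d, 0 < d -> exists N, forall k, (N <= k)%nat -> 1 - d <= Qm a m k.
Proof.
  intros Ha. induction m; intros d Hd.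
  - exists 0%nat. intros. rewrite Qm_0. lra.
  - destruct (psum_large a (d/2) Ha ltac:(lra)) as [N0 H0].
    destruct (IHm (d/2) ltac:(lra)) as [N1 H1].
    exists (N0 + N1)%nat. intros k Hk. rewrite Qm_rec.
    apply Rle_trans with (sum_f_R0 (fun j => pT a j * Qm a m (k - j)%nat) N0).
    + apply Rle_trans with (sum_f_R0 (fun j => pT a j * (1 - d/2)) N0).
      * rewrite sum_scal_r. specialize (H0 N0 (le_n _)).
        assert (0 <= 1 - d/2 \/ 1 - d/2 < 0) by lra. destruct H.
        -- apply Rle_trans with ((1 - d/2) * (1 - d/2)). nra. apply Rmult_le_compat_r; auto.
        -- assert (sum_f_R0 (pT a) N0 <= 1) by (apply psum_le1; auto). nra.
      * apply sum_Rle. intros j Hj. apply Rmult_le_compat_l. left; apply pT_pos; auto. apply H1. lia.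
    + apply sum_mono_N. intros. apply Rmult_le_pos. left; apply pT_pos; auto. apply Qm_nonneg; auto. lia.
Qed.

Lemma F_rec_low a m i : 0 < a ->
  sum_f_R0 (fun j => pT a j * (rp (INR j) (1 + a) * Qm a m (i - j)%nat)) i +
  sum_f_R0 (fun j => pT a j * Fm a m (i - j)%nat) i <= Fm a (S m) i.
Proof.
  intros Ha. unfold Fm at 2. rewrite conv_sum. rewrite <- sum_add. apply sum_Rle. intros j Hj.
  rewrite <- Rmult_plus_distr_l. apply Rmult_le_compat_l. left; apply pT_pos; auto.
  unfold Qm, Fm. rewrite <- sum_scal_l, <- sum_add. apply sum_Rle. intros r Hr.
  rewrite plus_INR. pose proof (conv_nonneg a m r Ha).
  pose proof (superadd (1 + a) (INR j) (INR r) ltac:(lra) (pos_INR j) (pos_INR r)).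
  replace (rp (INR j) (1 + a) * conv a m r + conv a m r * rp (INR r) (1 + a))
    with (conv a m r * (rp (INR j) (1 + a) + rp (INR r) (1 + a))) by ring.
  apply Rmult_le_compat_l; lra.
Qed.

Lemma ln_shift i n : (n <= i)%nat -> ln (INR i + 1) <= ln (INR (i - n) + 1) + ln (INR n + 1).
Proof.
  intros H. rewrite minus_INR by auto. apply le_INR in H. pose proof (pos_INR n).
  rewrite <- ln_mult by lra. apply ln_le_mono. lra. nra.
Qed.

Definition D1 (a : R) : R := c0 a * (ln (2 + a) + (2 + a)).

Lemma F_low a m : 0 < a -> forall e, 0 < e -> exists N, forall i, (N <= i)%nat ->
  (INR m * c0 a - e) * ln (INR i + 1) <= Fm a m i.
Proof.
  intros Ha. pose proof (c0_pos a Ha) as Hc.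
  induction m; intros e He.
  - exists 0%nat. intros i _. pose proof (Fm_nonneg a 0 i Ha). pose proof (ln_i1_nonneg i).
    simpl INR. nra.
  - set (A := INR (S m) * c0 a).
    assert (HA: 0 < A) by (unfold A; apply Rmult_lt_0_compat; [apply INR_S_pos|auto]).
    destruct (Rle_dec A e) as [HAe|HAe].
    { exists 0%nat. intros i _. pose proof (Fm_nonneg a (S m) i Ha). pose proof (ln_i1_nonneg i). nra. }
    apply Rnot_le_lt in HAe.
    set (dl := e / (4 * A)).
    assert (Hdl: 0 < dl) by (unfold dl; apply Rdiv_lt_0_compat; lra).
    assert (HdA: dl * A = e / 4) by (unfold dl; field; lra).
    assert (Hdl1: dl < 1).
    { apply Rmult_lt_reg_r with A; auto. rewrite HdA. lra. }
    destruct (Qm_cv a m Ha dl Hdl) as [NQ HQ].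
    destruct (psum_large a dl Ha Hdl) as [n Hn].
    destruct (IHm (e/2) ltac:(lra)) as [Nm HNm].
    set (Cst := c0 a * ln (INR NQ + 1) + D1 a + INR m * c0 a * ln (INR n + 1)).
    assert (HCst: 0 <= Cst).
    { unfold Cst, D1. pose proof (ln_i1_nonneg NQ). pose proof (ln_i1_nonneg n). pose proof (pos_INR m).
      assert (0 <= ln (2 + a)) by (rewrite <- ln_1; apply ln_le_mono; lra).
      assert (0 <= c0 a * ln (INR NQ + 1)) by (apply Rmult_le_pos; lra).
      assert (0 <= c0 a * (ln (2 + a) + (2 + a))) by (apply Rmult_le_pos; lra).
      assert (0 <= INR m * c0 a) by (apply Rmult_le_pos; lra).
      assert (0 <= INR m * c0 a * ln (INR n + 1)) by (apply Rmult_le_pos; lra). lra. }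
    destruct (INR_unbounded (exp (4 * Cst / e))) as [NL HNL].
    exists (NQ + n + Nm + NL)%nat. intros i Hi.
    set (L := ln (INR i + 1)).
    assert (HL: 4 * Cst / e <= L).
    { unfold L. rewrite <- (ln_exp (4 * Cst / e)). apply ln_le_mono. apply exp_pos.
      apply le_INR in Hi. rewrite !plus_INR in Hi. pose proof (pos_INR NQ). pose proof (pos_INR n).
      pose proof (pos_INR Nm). lra. }
    assert (HL0: 0 <= L) by apply ln_i1_nonneg.
    assert (TA: (1 - dl) * (c0 a * L - c0 a * ln (INR NQ + 1) - D1 a) <=
                sum_f_R0 (fun j => pT a j * (rp (INR j) (1 + a) * Qm a m (i - j)%nat)) i).
    { apply Rle_trans with (sum_f_R0 (fun j => pT a j * (rp (INR j) (1 + a) * Qm a m (i - j)%nat)) (i - NQ)).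
      - apply Rle_trans with ((1 - dl) * F1 a (i - NQ)).
        + apply Rmult_le_compat_l. lra. pose proof (F1_low a (i - NQ) Ha). unfold D1.
          pose proof (ln_shift i NQ ltac:(lia)). fold L in H0.
          assert (c0 a * L <= c0 a * (ln (INR (i - NQ) + 1) + ln (INR NQ + 1))) by (apply Rmult_le_compat_l; lra).
          lra.
        + unfold F1. rewrite <- sum_scal_l. apply sum_Rle. intros j Hj.
          pose proof (pT_pos a j Ha). pose proof (rp_nonneg (INR j) (1 + a)).
          assert (1 - dl <= Qm a m (i - j)) by (apply HQ; lia).
          replace ((1 - dl) * (rp (INR j) (1 + a) * pT a j)) with (pT a j * (rp (INR j) (1 + a) * (1 - dl))) by ring.
          apply Rmult_le_compat_l. lra. apply Rmult_le_compat_l; lra.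
      - apply sum_mono_N. intros. apply Rmult_le_pos. left; apply pT_pos; auto.
        apply Rmult_le_pos. apply rp_nonneg. apply Qm_nonneg; auto. lia. }
    assert (TB: (1 - dl) * ((INR m * c0 a - e/2) * L - INR m * c0 a * ln (INR n + 1)) <=
                sum_f_R0 (fun j => pT a j * Fm a m (i - j)%nat) i).
    { assert (HFm: (INR m * c0 a - e/2) * L - INR m * c0 a * ln (INR n + 1) <= Fm a m (i - n)).
      { pose proof (HNm (i - n)%nat ltac:(lia)).
        pose proof (ln_shift i n ltac:(lia)). fold L in H0.
        pose proof (ln_i1_nonneg n). pose proof (ln_i1_nonneg (i - n)). pose proof (pos_INR m).
        assert (0 <= INR m * c0 a) by (apply Rmult_le_pos; lra).
        destruct (Rle_dec 0 (INR m * c0 a - e/2)).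
        - assert ((INR m * c0 a - e/2) * L <= (INR m * c0 a - e/2) * (ln (INR (i - n) + 1) + ln (INR n + 1)))
            by (apply Rmult_le_compat_l; lra).
          assert ((INR m * c0 a - e/2) * ln (INR n + 1) <= INR m * c0 a * ln (INR n + 1))
            by (apply Rmult_le_compat_r; lra).
          nra.
        - assert (ln (INR (i - n) + 1) <= L).
          { unfold L. apply ln_le_mono. pose proof (pos_INR (i - n)); lra.
            rewrite minus_INR by lia. pose proof (pos_INR n); lra. }
          assert ((INR m * c0 a - e/2) * L <= (INR m * c0 a - e/2) * ln (INR (i - n) + 1))
            by (apply Rmult_le_compat_neg_l; lra).
          assert (0 <= INR m * c0 a * ln (INR n + 1)) by (apply Rmult_le_pos; lra).
          lra. }
      apply Rle_trans with (sum_f_R0 (fun j => pT a j * Fm a m (i - j)%nat) n).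
      - apply Rle_trans with (sum_f_R0 (fun j => pT a j * Fm a m (i - n)%nat) n).
        + rewrite sum_scal_r. specialize (Hn n (le_n _)). pose proof (Fm_nonneg a m (i - n) Ha).
          destruct (Rle_dec 0 ((INR m * c0 a - e/2) * L - INR m * c0 a * ln (INR n + 1))).
          * apply Rle_trans with ((1 - dl) * Fm a m (i - n)). apply Rmult_le_compat_l; lra.
            apply Rmult_le_compat_r; lra.
          * assert (0 <= sum_f_R0 (pT a) n * Fm a m (i - n)).
            { apply Rmult_le_pos; auto. apply sum_nonneg; intros; left; apply pT_pos; auto. }
            assert (0 <= 1 - dl) by lra. nra.
        + apply sum_Rle. intros j Hj. apply Rmult_le_compat_l. left; apply pT_pos; auto.
          apply Fm_mono; auto. lia.
      - apply sum_mono_N. intros. apply Rmult_le_pos. left; apply pT_pos; auto. apply Fm_nonneg; auto. lia. }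
    pose proof (F_rec_low a m i Ha).
    assert (HAeq: A = c0 a + INR m * c0 a) by (unfold A; rewrite S_INR; ring).
    fold A.
    assert (Key: (1 - dl) * (c0 a * L - c0 a * ln (INR NQ + 1) - D1 a) +
                 (1 - dl) * ((INR m * c0 a - e/2) * L - INR m * c0 a * ln (INR n + 1))
                 = (1 - dl) * (A - e/2) * L - (1 - dl) * Cst) by (unfold Cst; rewrite HAeq; ring).
    assert (K2: (A - 3 * e / 4) * L <= (1 - dl) * (A - e/2) * L).
    { apply Rmult_le_compat_r; auto. nra. }
    assert (K3: (1 - dl) * Cst <= Cst) by nra.
    assert (K4: Cst <= e / 4 * L).
    { apply Rmult_le_reg_l with (4 / e). apply Rdiv_lt_0_compat; lra.
      replace (4 / e * (e / 4 * L)) with L by (field; lra).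
      replace (4 / e * Cst) with (4 * Cst / e) by (field; lra). auto. }
    nra.
Qed.

Definition G2 (a : R) (m z : nat) : R :=
  Gamma (INR z + 2 * INR m + a + 1) / Gamma (INR z + 2 * INR m).
Definition Hm (a : R) (m i : nat) : R := sum_f_R0 (fun z => conv a m z * G2 a m z) i.
Definition dm (a : R) (m : nat) : R := 2 * INR m + a.

Lemma G2_bounds a m z : 0 < a -> (1 <= m)%nat ->
  rp (INR z) (1 + a) <= G2 a m z <= rp (INR z + dm a m) (1 + a).
Proof.
  intros Ha Hm. unfold G2, dm. apply le_INR in Hm. simpl in Hm. pose proof (pos_INR z).
  set (x := INR z + 2 * INR m).
  assert (Hx: 0 < x) by (unfold x; lra).
  pose proof (Gamma_pos x Hx).
  pose proof (Gamma_ratio_L x (1 + a) Hx ltac:(lra)) as L.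
  pose proof (Gamma_ratio_U x (1 + a) Hx ltac:(lra)) as U.
  replace (x + (1 + a)) with (INR z + 2 * INR m + a + 1) in L, U by (unfold x; ring).
  replace (INR z + 2 * INR m + a + 1 - 1) with (INR z + (2 * INR m + a)) in U by ring.
  split.
  - apply Rle_trans with (Rpower x (1 + a)).
    + destruct (Rle_lt_or_eq_dec 0 (INR z) (pos_INR z)) as [Hz|Hz].
      rewrite rp_pos_eq by lra. apply Rle_Rpower_l. lra. unfold x; split; lra.
      rewrite <- Hz, rp_0. left; apply Rpower_pos.
    + apply Rmult_le_reg_r with (Gamma x); auto. unfold Rdiv. rewrite Rmult_assoc, Rinv_l by lra. unfold x in *. lra.
  - rewrite rp_pos_eq by lra.
    apply Rmult_le_reg_r with (Gamma x); auto. unfold Rdiv. rewrite Rmult_assoc, Rinv_l by lra. unfold x in *. lra.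
Qed.

Lemma H_low a m i : 0 < a -> (1 <= m)%nat -> Fm a m i <= Hm a m i.
Proof.
  intros. unfold Fm, Hm. apply sum_Rle. intros z Hz. apply Rmult_le_compat_l. apply conv_nonneg; auto.
  apply G2_bounds; auto.
Qed.

Definition Em (a : R) (m : nat) : R :=
  rp (dm a m) (1 + a) + Cp a * (dm a m + rp (dm a m) a) * Kc a ^ m.

Lemma H_up a m i : 0 < a -> Hm a (S m) i <= Fm a (S m) i + Em a (S m).
Proof.
  intros Ha. unfold Hm, Em.
  set (d := dm a (S m)).
  assert (Hd: 0 < d) by (unfold d, dm; pose proof (pos_INR (S m)); lra).
  destruct (bounds a m Ha i) as [B1 [B2 _]].
  pose proof (Qm_le1 a (S m) i Ha) as HQ.
  apply Rle_trans with (sum_f_R0 (fun z => conv a (S m) z * rp (INR z) (1 + a) + rp d (1 + a) * conv a (S m) z +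
     Cp a * (d * (conv a (S m) z * rp (INR z) a) + rp d a * (conv a (S m) z * INR z))) i).
  - apply sum_Rle. intros z Hz. pose proof (conv_nonneg a (S m) z Ha).
    pose proof (G2_bounds a (S m) z Ha ltac:(lia)) as [_ G].
    pose proof (upperadd (1 + a) (INR z) d ltac:(lra) (pos_INR z) ltac:(lra)) as U.
    replace (1 + a - 1) with a in U by ring. fold (Cp a) in U. fold d in G.
    replace (conv a (S m) z * rp (INR z) (1 + a) + rp d (1 + a) * conv a (S m) z +
      Cp a * (d * (conv a (S m) z * rp (INR z) a) + rp d a * (conv a (S m) z * INR z)))
      with (conv a (S m) z * (rp (INR z) (1 + a) + rp d (1 + a) + Cp a * (d * rp (INR z) a + INR z * rp d a)))
      by ring.
    apply Rmult_le_compat_l; lra.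
  - rewrite !sum_add, !sum_scal_l, !sum_add, !sum_scal_l.
    fold (Fm a (S m) i). fold (Mam a (S m) i). fold (M1m a (S m) i).
    change (sum_f_R0 (conv a (S m)) i) with (Qm a (S m) i).
    pose proof (rp_nonneg d (1 + a)). pose proof (rp_nonneg d a). pose proof (Cp_ge1 a Ha).
    assert (rp d (1 + a) * Qm a (S m) i <= rp d (1 + a)) by (pose proof (Qm_nonneg a (S m) i Ha); nra).
    assert (d * Mam a (S m) i + rp d a * M1m a (S m) i <= (d + rp d a) * Kc a ^ S m).
    { assert (d * Mam a (S m) i <= d * Kc a ^ S m) by (apply Rmult_le_compat_l; lra).
      assert (rp d a * M1m a (S m) i <= rp d a * Kc a ^ S m) by (apply Rmult_le_compat_l; lra). nra. }
    assert (Cp a * (d * Mam a (S m) i + rp d a * M1m a (S m) i) <= Cp a * ((d + rp d a) * Kc a ^ S m))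
      by (apply Rmult_le_compat_l; lra).
    lra.
Qed.

Lemma Em_nonneg a m : 0 < a -> 0 <= Em a (S m).
Proof.
  intros Ha. unfold Em. pose proof (rp_nonneg (dm a (S m)) (1 + a)). pose proof (rp_nonneg (dm a (S m)) a).
  pose proof (Cp_ge1 a Ha). destruct (Kc_facts a Ha) as [K2 _].
  assert (0 <= dm a (S m)) by (unfold dm; pose proof (pos_INR (S m)); lra).
  assert (0 <= Kc a ^ S m) by (apply pow_le; lra).
  assert (0 <= Cp a * (dm a (S m) + rp (dm a (S m)) a)) by (apply Rmult_le_pos; lra).
  assert (0 <= Cp a * (dm a (S m) + rp (dm a (S m)) a) * Kc a ^ S m) by (apply Rmult_le_pos; lra). lra.
Qed.

Lemma ln_large M : exists N, forall i, (N <= i)%nat -> M < ln (INR i + 1).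
Proof.
  destruct (INR_unbounded (exp M)) as [N HN]. exists N. intros i Hi.
  apply le_INR in Hi. rewrite <- (ln_exp M). apply ln_increasing. apply exp_pos. lra.
Qed.

Lemma div_close X Dn M e : 0 < Dn -> Rabs (X - M * Dn) < e * Dn -> Rabs (X / Dn - M) < e.
Proof.
  intros HD H. replace (X / Dn - M) with ((X - M * Dn) / Dn) by (field; lra).
  unfold Rdiv. rewrite Rabs_mult, Rabs_inv, (Rabs_right Dn) by lra.
  apply Rmult_lt_reg_r with Dn; auto. rewrite Rmult_assoc, Rinv_l by lra. lra.
Qed.

Lemma V_cv a m : 0 < a -> Un_cv (fun i => Hm a (S m) i / (c0 a * ln (INR i + 1))) (INR (S m)).
Proof.
  intros Ha e He. pose proof (c0_pos a Ha) as Hc.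
  assert (Hec: 0 < e * c0 a) by (apply Rmult_lt_0_compat; lra).
  destruct (F_low a (S m) Ha (e * c0 a / 2) ltac:(lra)) as [N1 HN1].
  pose proof (Em_nonneg a m Ha).
  pose proof (pow_le (Kc a) (S m) ltac:(destruct (Kc_facts a Ha); lra)).
  destruct (ln_large (Rmax 1 ((Kc a ^ S m + Em a (S m)) / (e * c0 a)))) as [N2 HN2].
  exists (N1 + N2)%nat. intros i Hi. unfold Rdist.
  specialize (HN1 i ltac:(lia)). specialize (HN2 i ltac:(lia)).
  set (L := ln (INR i + 1)) in *.
  assert (HL1: 1 < L) by (pose proof (Rmax_l 1 ((Kc a ^ S m + Em a (S m)) / (e * c0 a))); lra).
  assert (HL2: (Kc a ^ S m + Em a (S m)) / (e * c0 a) < L)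
    by (pose proof (Rmax_r 1 ((Kc a ^ S m + Em a (S m)) / (e * c0 a))); lra).
  apply div_close. apply Rmult_lt_0_compat; lra.
  pose proof (H_low a (S m) i Ha ltac:(lia)). pose proof (H_up a m i Ha).
  destruct (bounds a m Ha i) as [_ [_ HF]]. fold L in HF.
  assert (HK: Kc a ^ S m + Em a (S m) < e * c0 a * L).
  { apply Rmult_lt_reg_r with (/ (e * c0 a)). apply Rinv_0_lt_compat; apply Rmult_lt_0_compat; lra.
    replace (e * c0 a * L * / (e * c0 a)) with L by (field; lra). auto. }
  apply Rabs_def1.
  - assert (INR (S m) * c0 a * L = INR (S m) * (c0 a * L)) by ring. nra.
  - assert (e * c0 a * L > 0) by (apply Rmult_lt_0_compat; [apply Rmult_lt_0_compat|]; lra).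
    nra.
Qed.

Lemma inf_sum_cv f s : infinite_sum f s -> Un_cv (sum_f_R0 f) s.
Proof. auto. Qed.

Lemma tail_bound (f B : nat -> R) s sb M :
  infinite_sum f s -> infinite_sum B sb -> (forall m, Rabs (f m) <= B m) ->
  Rabs (s - sum_f_R0 f M) <= sb - sum_f_R0 B M.
Proof.
  intros Hf HB Hle.
  assert (HB0: forall m, 0 <= B m) by (intro m; pose proof (Hle m); pose proof (Rabs_pos (f m)); lra).
  assert (Hst: forall N, Rabs (sum_f_R0 f (N + M) - sum_f_R0 f M) <= sum_f_R0 B (N + M) - sum_f_R0 B M).
  { induction N.
    - simpl. rewrite Rminus_diag, Rabs_R0. lra.
    - replace (S N + M)%nat with (S (N + M)) by lia. rewrite !tech5.
      replace (sum_f_R0 f (N + M) + f (S (N + M)) - sum_f_R0 f M)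
        with ((sum_f_R0 f (N + M) - sum_f_R0 f M) + f (S (N + M))) by ring.
      eapply Rle_trans. apply Rabs_triang. pose proof (Hle (S (N + M))). lra. }
  apply Rle_cv_lim with (Un := fun N => Rabs (sum_f_R0 f (N + M) - sum_f_R0 f M))
                        (Vn := fun N => sb - sum_f_R0 B M).
  - intros N. eapply Rle_trans. apply Hst. pose proof (sum_incr B (N + M) sb HB HB0). lra.
  - apply cv_cvabs. apply CV_minus. apply CV_shift'. auto. apply Un_cv_const.
  - apply Un_cv_const.
Qed.

Lemma finite_sum_cv (w : nat -> nat -> R) (L : nat -> R) M :
  (forall m, Un_cv (fun i => w i m) (L m)) -> Un_cv (fun i => sum_f_R0 (w i) M) (sum_f_R0 L M).
Proof.
  intros H. induction M.
  - simpl. apply H.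
  - simpl. apply CV_plus; auto.
Qed.

Lemma lim_bound (u : nat -> R) l b i0 : Un_cv u l -> (forall i, (i0 <= i)%nat -> Rabs (u i) <= b) -> Rabs l <= b.
Proof.
  intros Hu Hb. apply Rle_cv_lim with (Un := fun n => Rabs (u (n + i0)%nat)) (Vn := fun _ => b).
  - intros n. apply Hb. lia.
  - apply cv_cvabs. apply CV_shift'. auto.
  - apply Un_cv_const.
Qed.

Lemma tannery (w : nat -> nat -> R) (L B S : nat -> R) SL SB i0 :
  (forall m, Un_cv (fun i => w i m) (L m)) ->
  (forall i m, (i0 <= i)%nat -> Rabs (w i m) <= B m) ->
  infinite_sum B SB -> infinite_sum L SL ->
  (forall i, (i0 <= i)%nat -> infinite_sum (w i) (S i)) ->
  Un_cv S SL.
Proof.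
  intros Hw Hb HB HL HS e He.
  assert (HLb: forall m, Rabs (L m) <= B m) by (intro m; apply (lim_bound _ _ _ i0 (Hw m)); intros; apply Hb; auto).
  destruct (HB (e/3) ltac:(lra)) as [M HM]. specialize (HM M (le_n _)). unfold Rdist in HM.
  assert (Ht: SB - sum_f_R0 B M < e/3) by (apply Rabs_def2 in HM; lra).
  destruct (finite_sum_cv w L M Hw (e/3) ltac:(lra)) as [N HN].
  exists (i0 + N)%nat. intros i Hi. unfold Rdist.
  pose proof (tail_bound (w i) B (S i) SB M (HS i ltac:(lia)) HB (fun m => Hb i m ltac:(lia))).
  pose proof (tail_bound L B SL SB M HL HB HLb).
  specialize (HN i ltac:(lia)). unfold Rdist in HN.
  replace (S i - SL) with ((S i - sum_f_R0 (w i) M) + (sum_f_R0 (w i) M - sum_f_R0 L M) - (SL - sum_f_R0 L M))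
    by ring.
  eapply Rle_lt_trans. apply Rabs_triang. rewrite Rabs_Ropp.
  eapply Rle_lt_trans. apply Rplus_le_compat_r. apply Rabs_triang. lra.
Qed.

Lemma inf_sum_ext f g s : (forall n, f n = g n) -> infinite_sum f s -> infinite_sum g s.
Proof.
  intros He Hf e Hep. destruct (Hf e Hep) as [N HN]. exists N. intros n Hn.
  rewrite (sum_eq g f) by (intros; symmetry; apply He). apply HN; auto.
Qed.

Lemma inf_sum_scal f s c : infinite_sum f s -> infinite_sum (fun n => c * f n) (c * s).
Proof.
  intros Hf. unfold infinite_sum. fold (Un_cv (sum_f_R0 (fun n => c * f n)) (c * s)).
  apply Un_cv_ext_from with (N := 0%nat) (v := fun N => c * sum_f_R0 f N).
  - intros n _. clear Hf. induction n; simpl. ring. rewrite IHn. ring.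
  - apply CV_mult. apply Un_cv_const. apply Hf.
Qed.

Lemma poisson_exp lam La : infinite_sum (fun m => poisson lam m * La ^ m) (exp (- lam) * exp (lam * La)).
Proof.
  pose proof (proj2_sig (exist_exp (lam * La))) as H. change (exp_in (lam * La) (exp (lam * La))) in H.
  unfold exp_in in H. apply inf_sum_scal with (c := exp (- lam)) in H.
  eapply inf_sum_ext; [|apply H]. intros n. unfold poisson. rewrite Rpow_mult_distr.
  pose proof (INR_fact_lt_0 n). field. lra.
Qed.

Definition Lp (lam : R) (m : nat) : R := poisson lam m * INR m / lam.

Lemma Lp_sum lam : 0 < lam -> infinite_sum (Lp lam) 1.
Proof.
  intros Hl.
  assert (E: forall N, sum_f_R0 (Lp lam) (S N) = sum_f_R0 (fun m => poisson lam m * 1 ^ m) N).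
  { induction N.
    - simpl. unfold Lp, poisson. simpl. field. lra.
    - rewrite tech5, IHN, tech5. f_equal. unfold Lp, poisson. rewrite pow1.
      change (Factorial.fact (S (S N))) with ((S (S N)) * Factorial.fact (S N))%nat.
      rewrite mult_INR. change (lam ^ S (S N)) with (lam * lam ^ (S N)).
      pose proof (INR_fact_lt_0 (S N)). pose proof (INR_S_pos (S N)). field. lra. }
  pose proof (poisson_exp lam 1) as P. rewrite Rmult_1_r, <- exp_plus, Rplus_opp_l, exp_0 in P.
  unfold infinite_sum. fold (Un_cv (sum_f_R0 (Lp lam)) 1).
  apply CV_shift with 1%nat. eapply Un_cv_ext_from with (N := 0%nat). 2: apply P.
  intros n _. replace (n + 1)%nat with (S n) by lia. apply E.
Qed.

Definition Um (a : R) (i m : nat) : R :=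
  Gamma (INR i + 2 * INR m) / Gamma (INR i + 2 * INR m + a + 2).
Definition Uu (a : R) (i m : nat) : R := Um a i m * Rpower (INR i) (2 + a).

Lemma Uu_gen (I x s G0 G1 : R) : 0 < I -> I <= x -> 1 <= s -> 0 < G0 ->
  G0 * Rpower x s <= G1 -> G1 <= G0 * Rpower (x + s - 1) s ->
  1 - s * (x - I + s - 1) / (x + s - 1) <= G0 / G1 * Rpower I s /\ 0 <= G0 / G1 * Rpower I s <= 1.
Proof.
  intros HI HIx Hs HG0 L U.
  pose proof (Rpower_pos I s). pose proof (Rpower_pos x s). pose proof (Rpower_pos (x + s - 1) s).
  assert (HG1: 0 < G1) by nra.
  assert (Hix: Rpower I s <= Rpower x s) by (apply Rle_Rpower_l; lra).
  split; [|split].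
  - apply Rle_trans with (Rpower I s / Rpower (x + s - 1) s).
    + assert (E: Rpower I s / Rpower (x + s - 1) s = Rpower (I / (x + s - 1)) s).
      { unfold Rdiv. rewrite <- Rpower_mult_distr by (try apply Rinv_0_lt_compat; lra).
        f_equal. rewrite <- Rpower_Ropp. unfold Rpower. rewrite ln_Rinv by lra. f_equal; ring. }
      rewrite E. eapply Rle_trans; [|apply bern; [lra|apply Rdiv_lt_0_compat; lra]].
      right. field. lra.
    + unfold Rdiv. rewrite (Rmult_comm (G0 * / G1)). apply Rmult_le_compat_l. lra.
      apply Rmult_le_reg_r with (G1 * Rpower (x + s - 1) s). nra.
      replace (/ Rpower (x + s - 1) s * (G1 * Rpower (x + s - 1) s)) with G1 by (field; lra).
      replace (G0 * / G1 * (G1 * Rpower (x + s - 1) s)) with (G0 * Rpower (x + s - 1) s) by (field; lra). lra.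
  - apply Rmult_le_pos; [|lra]. apply Rdiv_le_0_compat; lra.
  - apply Rle_trans with (Rpower I s / Rpower x s).
    + unfold Rdiv. rewrite (Rmult_comm (G0 * / G1)). apply Rmult_le_compat_l. lra.
      apply Rmult_le_reg_r with (G1 * Rpower x s). nra.
      replace (/ Rpower x s * (G1 * Rpower x s)) with G1 by (field; lra).
      replace (G0 * / G1 * (G1 * Rpower x s)) with (G0 * Rpower x s) by (field; lra). lra.
    + apply Rdiv_le_1; lra.
Qed.

Lemma Uu_bounds a i m : 0 < a -> (1 <= i)%nat -> (1 <= m)%nat ->
  1 - (2 + a) * (2 * INR m + 1 + a) / (INR i + 2 * INR m + 1 + a) <= Uu a i m /\ 0 <= Uu a i m <= 1.
Proof.
  intros Ha Hi Hm. apply le_INR in Hi, Hm. simpl in Hi, Hm. unfold Uu, Um.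
  assert (Hx: 0 < INR i + 2 * INR m) by lra.
  pose proof (Gamma_ratio_L (INR i + 2 * INR m) (2 + a) Hx ltac:(lra)) as L.
  pose proof (Gamma_ratio_U (INR i + 2 * INR m) (2 + a) Hx ltac:(lra)) as U.
  replace (INR i + 2 * INR m + (2 + a)) with (INR i + 2 * INR m + a + 2) in L by ring.
  replace (Gamma (INR i + 2 * INR m + (2 + a))) with (Gamma (INR i + 2 * INR m + a + 2)) in U
    by (apply Gamma_arg; ring).
  pose proof (Uu_gen (INR i) (INR i + 2 * INR m) (2 + a) (Gamma (INR i + 2 * INR m))
     (Gamma (INR i + 2 * INR m + a + 2)) ltac:(lra) ltac:(lra) ltac:(lra) (Gamma_pos _ Hx) L U) as G.
  replace ((2 + a) * (INR i + 2 * INR m - INR i + (2 + a) - 1) / (INR i + 2 * INR m + (2 + a) - 1))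
    with ((2 + a) * (2 * INR m + 1 + a) / (INR i + 2 * INR m + 1 + a)) in G by (field; lra).
  exact G.
Qed.

Lemma Uu_cv a m : 0 < a -> Un_cv (fun i => Uu a i (S m)) 1.
Proof.
  intros Ha e He.
  pose proof (pos_INR (S m)).
  set (c := (2 + a) * (2 * INR (S m) + 1 + a)).
  assert (Hc: 0 < c) by (unfold c; apply Rmult_lt_0_compat; lra).
  destruct (inv_cv (2 * INR (S m) + 1 + a) ltac:(lra) (e / c) ltac:(apply Rdiv_lt_0_compat; lra)) as [N HN].
  exists (N + 1)%nat. intros i Hi. specialize (HN i ltac:(lia)). unfold Rdist in *.
  destruct (Uu_bounds a i (S m) Ha ltac:(lia) ltac:(lia)) as [L [U0 U1]].
  rewrite Rminus_0_r in HN. pose proof (pos_INR i).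
  rewrite Rabs_right in HN by (left; apply Rinv_0_lt_compat; lra).
  replace ((2 + a) * (2 * INR (S m) + 1 + a) / (INR i + 2 * INR (S m) + 1 + a))
    with (c * / (INR i + (2 * INR (S m) + 1 + a))) in L by (unfold c; field; lra).
  assert (c * / (INR i + (2 * INR (S m) + 1 + a)) < e).
  { apply Rmult_lt_reg_l with (/ c). apply Rinv_0_lt_compat; lra.
    replace (/ c * (c * / (INR i + (2 * INR (S m) + 1 + a)))) with (/ (INR i + (2 * INR (S m) + 1 + a)))
      by (field; lra).
    replace (/ c * e) with (e / c) by (field; lra). lra. }
  rewrite Rabs_left1 by lra. lra.
Qed.

Lemma ln3_ge1 : 1 <= ln 3.
Proof. rewrite <- (ln_exp 1). apply ln_le_mono. apply exp_pos. apply exp_le_3. Qed.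

Lemma V_bound a m i : 0 < a -> (2 <= i)%nat ->
  0 <= Hm a (S m) i / (c0 a * ln (INR i + 1)) <= INR (S m) + (Kc a ^ S m + Em a (S m)) / c0 a.
Proof.
  intros Ha Hi. pose proof (c0_pos a Ha).
  assert (HL: 1 <= ln (INR i + 1)).
  { eapply Rle_trans. apply ln3_ge1. apply ln_le_mono. lra. apply le_INR in Hi. simpl in Hi. lra. }
  pose proof (H_low a (S m) i Ha ltac:(lia)). pose proof (H_up a m i Ha).
  destruct (bounds a m Ha i) as [_ [_ HF]]. pose proof (Fm_nonneg a (S m) i Ha).
  pose proof (Em_nonneg a m Ha). pose proof (pow_le (Kc a) (S m) ltac:(destruct (Kc_facts a Ha); lra)).
  set (L := ln (INR i + 1)) in *.
  assert (HcL: 0 < c0 a * L) by nra.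
  split.
  - apply Rdiv_le_0_compat; lra.
  - apply Rmult_le_reg_r with (c0 a * L); auto.
    replace (Hm a (S m) i / (c0 a * L) * (c0 a * L)) with (Hm a (S m) i) by (field; lra).
    replace ((INR (S m) + (Kc a ^ S m + Em a (S m)) / c0 a) * (c0 a * L))
      with (INR (S m) * c0 a * L + (Kc a ^ S m + Em a (S m)) * L) by (field; lra).
    assert (Kc a ^ S m + Em a (S m) <= (Kc a ^ S m + Em a (S m)) * L) by nra.
    lra.
Qed.

Definition Wm (a : R) (m : nat) : R := INR m + (Kc a ^ m + Em a m) / c0 a.
Definition Lam (a : R) : R := 2 * Kc a * Rpower 2 (1 + a) * Rpower 2 a.
Definition Cb (a : R) : R := 1 + (1 + rp (2 + a) (1 + a) + Cp a * ((2 + a) + rp (2 + a) a)) / c0 a.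

Lemma INR_le_pow2 n : INR n <= 2 ^ n.
Proof.
  induction n. simpl. lra. rewrite S_INR. simpl.
  assert (1 <= 2 ^ n) by (apply pow_R1_Rle; lra). lra.
Qed.

Lemma rp_pow2m p n : rp (2 ^ n) p = Rpower 2 p ^ n.
Proof.
  induction n.
  - simpl. rewrite rp_pos_eq by lra. apply Rpower_1_base.
  - simpl. rewrite rp_mult, IHn by (try lra; apply pow_le; lra). rewrite rp_pos_eq by lra. auto.
Qed.

Lemma Rpower2_ge1 q : 0 <= q -> 1 <= Rpower 2 q.
Proof. intros. rewrite <- (Rpower_O 2) by lra. apply Rle_Rpower; lra. Qed.

Lemma W_exp a m : 0 < a -> Wm a (S m) <= Cb a * Lam a ^ S m.
Proof.
  intros Ha. set (n := S m). unfold Wm, Em, Cb, dm.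
  destruct (Kc_facts a Ha) as [K2 _]. pose proof (c0_pos a Ha) as Hc.
  pose proof (Cp_ge1 a Ha) as HC.
  set (K := Kc a) in *. set (P := Rpower 2 (1 + a)). set (Q := Rpower 2 a).
  assert (HP: 1 <= P) by (apply Rpower2_ge1; lra).
  assert (HQ: 1 <= Q) by (apply Rpower2_ge1; lra).
  assert (HLam: Lam a = 2 * K * P * Q) by auto.
  set (Lm := Lam a) in *.
  assert (Hpow: forall x, 0 <= x <= Lm -> x ^ n <= Lm ^ n) by (intros; apply pow_incr; auto).
  assert (E1: 2 * K <= 2 * K * P) by nra.
  assert (E2: 2 * K * P <= Lm) by (rewrite HLam; assert (0 <= 2 * K * P) by nra; nra).
  assert (E3: P <= Lm) by (rewrite HLam; assert (1 <= 2 * K * Q) by nra;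
     replace (2 * K * P * Q) with (P * (2 * K * Q)) by ring; nra).
  assert (E4: Q * K <= Lm) by (rewrite HLam; assert (0 <= Q * K) by nra;
     replace (2 * K * P * Q) with ((Q * K) * (2 * P)) by ring; nra).
  assert (h2: 2 ^ n <= Lm ^ n) by (apply Hpow; split; lra).
  assert (hK: K ^ n <= Lm ^ n) by (apply Hpow; split; lra).
  assert (hP: P ^ n <= Lm ^ n) by (apply Hpow; split; lra).
  assert (h2K: 2 ^ n * K ^ n <= Lm ^ n) by (rewrite <- Rpow_mult_distr; apply Hpow; split; lra).
  assert (hQK: Q ^ n * K ^ n <= Lm ^ n) by (rewrite <- Rpow_mult_distr; apply Hpow; split; nra).
  pose proof (INR_le_pow2 n) as Hn.
  assert (H2n: 1 <= 2 ^ n) by (apply pow_R1_Rle; lra).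
  assert (Hd: 2 * INR n + a <= (2 + a) * 2 ^ n) by nra.
  assert (Hd0: 0 <= 2 * INR n + a) by (pose proof (pos_INR n); lra).
  assert (HdP: rp (2 * INR n + a) (1 + a) <= rp (2 + a) (1 + a) * P ^ n).
  { eapply Rle_trans. apply rp_mono. lra. split. auto. apply Hd.
    rewrite rp_mult, rp_pow2m by (try lra; apply pow_le; lra). unfold P, Q; lra. }
  assert (HdQ: rp (2 * INR n + a) a <= rp (2 + a) a * Q ^ n).
  { eapply Rle_trans. apply rp_mono. lra. split. auto. apply Hd.
    rewrite rp_mult, rp_pow2m by (try lra; apply pow_le; lra). unfold P, Q; lra. }
  pose proof (rp_nonneg (2 + a) (1 + a)). pose proof (rp_nonneg (2 + a) a).
  pose proof (pow_le K n ltac:(lra)). pose proof (pow_le Q n ltac:(lra)). pose proof (pow_le 2 n ltac:(lra)).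
  pose proof (pow_le Lm n ltac:(lra)).
  assert (T: K ^ n + (rp (2 * INR n + a) (1 + a) + Cp a * (2 * INR n + a + rp (2 * INR n + a) a) * K ^ n)
             <= (1 + rp (2 + a) (1 + a) + Cp a * ((2 + a) + rp (2 + a) a)) * Lm ^ n).
  { assert (A1: rp (2 * INR n + a) (1 + a) <= rp (2 + a) (1 + a) * Lm ^ n) by nra.
    assert (A2: (2 * INR n + a) * K ^ n <= (2 + a) * Lm ^ n).
    { apply Rle_trans with ((2 + a) * (2 ^ n * K ^ n)). nra. nra. }
    assert (A3: rp (2 * INR n + a) a * K ^ n <= rp (2 + a) a * Lm ^ n).
    { apply Rle_trans with (rp (2 + a) a * (Q ^ n * K ^ n)). nra. nra. }
    assert (A4: Cp a * (2 * INR n + a + rp (2 * INR n + a) a) * K ^ n <= Cp a * ((2 + a) + rp (2 + a) a) * Lm ^ n).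
    { replace (Cp a * (2 * INR n + a + rp (2 * INR n + a) a) * K ^ n)
        with (Cp a * ((2 * INR n + a) * K ^ n + rp (2 * INR n + a) a * K ^ n)) by ring.
      replace (Cp a * ((2 + a) + rp (2 + a) a) * Lm ^ n) with (Cp a * ((2 + a) * Lm ^ n + rp (2 + a) a * Lm ^ n)) by ring.
      apply Rmult_le_compat_l; lra. }
    nra. }
  replace ((1 + (1 + rp (2 + a) (1 + a) + Cp a * (2 + a + rp (2 + a) a)) / c0 a) * Lm ^ n)
    with (Lm ^ n + ((1 + rp (2 + a) (1 + a) + Cp a * (2 + a + rp (2 + a) a)) * Lm ^ n) / c0 a) by (field; lra).
  apply Rplus_le_compat. lra.
  unfold Rdiv. apply Rmult_le_compat_r. left; apply Rinv_0_lt_compat; lra. lra.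
Qed.

Lemma yterm_0 lam a i : yterm lam a i 0 = 0.
Proof. unfold yterm. simpl. auto. Qed.

Lemma yterm_S lam a i m :
  yterm lam a i (S m) = (1 + a) * poisson lam (S m) * (Um a i (S m) * Hm a (S m) i).
Proof.
  unfold yterm. change (Nat.eqb (S m) 0) with false. cbv iota.
  f_equal. unfold Hm. rewrite <- sum_scal_l. apply sum_eq. intros. unfold yfactor, Um, G2. ring.
Qed.

Lemma poisson_pos lam m : 0 < lam -> 0 < poisson lam m.
Proof.
  intros. unfold poisson. apply Rdiv_lt_0_compat. apply Rmult_lt_0_compat. apply exp_pos.
  apply pow_lt; auto. apply INR_fact_lt_0.
Qed.

Lemma Um_pos a i m : 0 < a -> (1 <= m)%nat -> 0 < Um a i m.
Proof.
  intros Ha Hm. apply le_INR in Hm. simpl in Hm. pose proof (pos_INR i).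
  unfold Um. apply Rdiv_lt_0_compat; apply Gamma_pos; lra.
Qed.

Lemma Hm_nonneg a m i : 0 < a -> 0 <= Hm a (S m) i.
Proof.
  intros Ha. pose proof (H_low a (S m) i Ha ltac:(lia)). pose proof (Fm_nonneg a (S m) i Ha). lra.
Qed.

Lemma Hm_up a m i : 0 < a -> Hm a (S m) i <= c0 a * (ln (INR i + 1) + 1) * Wm a (S m).
Proof.
  intros Ha. pose proof (H_up a m i Ha). destruct (bounds a m Ha i) as [_ [_ HF]].
  pose proof (c0_pos a Ha). pose proof (ln_i1_nonneg i). pose proof (Em_nonneg a m Ha).
  pose proof (pow_le (Kc a) (S m) ltac:(destruct (Kc_facts a Ha); lra)). pose proof (pos_INR (S m)).
  unfold Wm.
  replace (c0 a * (ln (INR i + 1) + 1) * (INR (S m) + (Kc a ^ S m + Em a (S m)) / c0 a))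
    with (INR (S m) * c0 a * ln (INR i + 1) + INR (S m) * c0 a + (ln (INR i + 1) + 1) * (Kc a ^ S m + Em a (S m)))
    by (field; lra).
  assert (0 <= INR (S m) * c0 a) by (apply Rmult_le_pos; lra).
  assert (0 <= ln (INR i + 1) * (Kc a ^ S m + Em a (S m))) by (apply Rmult_le_pos; lra).
  nra.
Qed.

Lemma Um_up a i m : 0 < a -> (1 <= i)%nat -> (1 <= m)%nat -> Um a i m <= / Rpower (INR i) (2 + a).
Proof.
  intros Ha Hi Hm. destruct (Uu_bounds a i m Ha Hi Hm) as [_ [_ H]]. unfold Uu in H.
  pose proof (Rpower_pos (INR i) (2 + a)).
  apply Rmult_le_reg_r with (Rpower (INR i) (2 + a)); auto. rewrite Rinv_l by lra. auto.
Qed.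

Lemma Lam_pos a : 0 < a -> 0 < Lam a.
Proof.
  intros Ha. unfold Lam. destruct (Kc_facts a Ha) as [K2 _].
  pose proof (Rpower_pos 2 (1 + a)). pose proof (Rpower_pos 2 a).
  assert (0 < 2 * Kc a) by lra.
  assert (0 < 2 * Kc a * Rpower 2 (1 + a)) by (apply Rmult_lt_0_compat; lra).
  apply Rmult_lt_0_compat; lra.
Qed.

Lemma exist_part lam a i : 0 < lam -> 0 < a -> (1 <= i)%nat -> exists l, infinite_sum (yterm lam a i) l.
Proof.
  intros Hl Ha Hi.
  set (ci := (1 + a) * / Rpower (INR i) (2 + a) * (c0 a * (ln (INR i + 1) + 1)) * Cb a).
  assert (Hci: 0 <= ci).
  { unfold ci. pose proof (c0_pos a Ha). pose proof (ln_i1_nonneg i).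
    assert (0 < / Rpower (INR i) (2 + a)) by (apply Rinv_0_lt_compat, Rpower_pos).
    assert (0 <= Cb a).
    { unfold Cb. pose proof (rp_nonneg (2 + a) (1 + a)). pose proof (rp_nonneg (2 + a) a).
      pose proof (Cp_ge1 a Ha).
      assert (0 <= Cp a * (2 + a + rp (2 + a) a)) by (apply Rmult_le_pos; lra).
      assert (0 <= (1 + rp (2 + a) (1 + a) + Cp a * (2 + a + rp (2 + a) a)) / c0 a) by (apply Rdiv_le_0_compat; lra).
      lra. }
    apply Rmult_le_pos; [|lra]. apply Rmult_le_pos. apply Rmult_le_pos; lra.
    apply Rmult_le_pos; lra. }
  destruct (Rseries_CV_comp (yterm lam a i) (fun m => ci * (poisson lam m * Lam a ^ m))) as [l Hlim].
  - intros m. destruct m.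
    + rewrite yterm_0. split. lra. apply Rmult_le_pos; auto. apply Rmult_le_pos.
      left; apply poisson_pos; auto. apply pow_le. left; apply Lam_pos; auto.
    + rewrite yterm_S. pose proof (poisson_pos lam (S m) Hl). pose proof (Um_pos a i (S m) Ha ltac:(lia)).
      pose proof (Hm_nonneg a m i Ha).
      split.
      * apply Rmult_le_pos. apply Rmult_le_pos; lra. apply Rmult_le_pos; lra.
      * pose proof (Um_up a i (S m) Ha Hi ltac:(lia)). pose proof (Hm_up a m i Ha).
        pose proof (W_exp a m Ha). pose proof (c0_pos a Ha). pose proof (ln_i1_nonneg i).
        assert (0 <= c0 a * (ln (INR i + 1) + 1)) by (apply Rmult_le_pos; lra).
        assert (Hm2: Hm a (S m) i <= c0 a * (ln (INR i + 1) + 1) * (Cb a * Lam a ^ S m)).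
        { eapply Rle_trans. apply H3. apply Rmult_le_compat_l; auto. }
        assert (HUH: Um a i (S m) * Hm a (S m) i <= / Rpower (INR i) (2 + a) * (c0 a * (ln (INR i + 1) + 1) * (Cb a * Lam a ^ S m))).
        { apply Rmult_le_compat; lra. }
        unfold ci.
        replace ((1 + a) * / Rpower (INR i) (2 + a) * (c0 a * (ln (INR i + 1) + 1)) * Cb a * (poisson lam (S m) * Lam a ^ S m))
          with ((1 + a) * poisson lam (S m) * (/ Rpower (INR i) (2 + a) * (c0 a * (ln (INR i + 1) + 1) * (Cb a * Lam a ^ S m))))
          by ring.
        apply Rmult_le_compat_l. apply Rmult_le_pos; lra. auto.
  - exists (ci * (exp (- lam) * exp (lam * Lam a))). apply inf_sum_scal. apply poisson_exp.
  - exists l. exact Hlim.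
Qed.

Lemma lnratio_cv : Un_cv (fun i => ln (INR i + 1) / ln (INR i)) 1.
Proof.
  intros e He. destruct (INR_unbounded (/ e)) as [N HN].
  exists (N + 3)%nat. intros i Hi. unfold Rdist.
  apply le_INR in Hi. rewrite plus_INR in Hi. simpl in Hi. pose proof (pos_INR N).
  assert (Hi3: 3 <= INR i) by lra.
  assert (HL: 1 <= ln (INR i)) by (eapply Rle_trans; [apply ln3_ge1|apply ln_le_mono; lra]).
  assert (D1: 0 <= ln (INR i + 1) - ln (INR i)).
  { assert (ln (INR i) <= ln (INR i + 1)) by (apply ln_le_mono; lra). lra. }
  assert (D2: ln (INR i + 1) - ln (INR i) <= / INR i).
  { rewrite <- ln_div' by lra. replace ((INR i + 1) / INR i) with (1 + / INR i) by (field; lra).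
    apply ln_1p_le. assert (0 < / INR i) by (apply Rinv_0_lt_compat; lra). lra. }
  replace (ln (INR i + 1) / ln (INR i) - 1) with ((ln (INR i + 1) - ln (INR i)) / ln (INR i)) by (field; lra).
  rewrite Rabs_right by (apply Rle_ge, Rdiv_le_0_compat; lra).
  apply Rle_lt_trans with (/ INR i).
  - apply Rle_trans with (ln (INR i + 1) - ln (INR i)). 2: lra.
    unfold Rdiv. rewrite <- (Rmult_1_r (ln (INR i + 1) - ln (INR i))) at 2. apply Rmult_le_compat_l. lra.
    rewrite <- Rinv_1. apply Rinv_le_contravar; lra.
  - apply Rmult_lt_reg_r with (INR i). lra. rewrite Rinv_l by lra.
    apply Rmult_lt_reg_l with (/ e). apply Rinv_0_lt_compat; lra.
    replace (/ e * (e * INR i)) with (INR i) by (field; lra). lra.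
Qed.


Definition Dp (lam a : R) (i : nat) : R :=
  lam * (1 + a) ^ 2 * Gamma (2 + a) * Rpower (INR i) (- 2 - a) * ln (INR i + 1).

Lemma ln_i1_pos i : (1 <= i)%nat -> 0 < ln (INR i + 1).
Proof. intros. apply le_INR in H. simpl in H. rewrite <- ln_1. apply ln_increasing; lra. Qed.

Lemma w_eq lam a i m : 0 < lam -> 0 < a -> (1 <= i)%nat ->
  yterm lam a i (S m) / Dp lam a i =
  poisson lam (S m) / lam * Uu a i (S m) * (Hm a (S m) i / (c0 a * ln (INR i + 1))).
Proof.
  intros Hl Ha Hi. rewrite yterm_S. unfold Dp, Uu, c0.
  replace (- 2 - a) with (- (2 + a)) by ring. rewrite Rpower_Ropp.
  pose proof (Gamma_pos (2 + a) ltac:(lra)). pose proof (Rpower_pos (INR i) (2 + a)).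
  pose proof (ln_i1_pos i Hi).
  field. repeat split; lra.
Qed.

Theorem mainTheorem2 (lambda : R) (k : nat) :
  0 < lambda -> (1 <= k)%nat ->
  let alpha := INR k / lambda in
  (forall i : nat, (1 <= i)%nat -> exists l, infinite_sum (yterm lambda alpha i) l) /\
  (forall y : nat -> R,
     (forall i : nat, (1 <= i)%nat -> infinite_sum (yterm lambda alpha i) (y i)) ->
     Un_cv (fun i => y i /
              (lambda * (1 + alpha) ^ 2 * Gamma (2 + alpha)
               * Rpower (INR i) (- 2 - alpha) * ln (INR i))) 1).
Proof.
  intros Hl Hk alpha.
  assert (Ha: 0 < alpha). { unfold alpha. apply Rdiv_lt_0_compat; auto. apply lt_0_INR; lia. }
  clearbody alpha.
  split.
  - intros i Hi. apply exist_part; auto.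
  - intros y Hy.
    set (w := fun i m => yterm lambda alpha i m / Dp lambda alpha i).
    assert (Ht: Un_cv (fun i => y i / Dp lambda alpha i) 1).
    { apply (tannery w (Lp lambda) (fun m => poisson lambda m / lambda * (Cb alpha * Lam alpha ^ m)) _ 1
          (/ lambda * Cb alpha * (exp (- lambda) * exp (lambda * Lam alpha))) 2).
      - intros m. destruct m.
        + apply Un_cv_ext_from with (N := 0%nat) (v := fun _ => 0).
          * intros. unfold w. rewrite yterm_0. unfold Rdiv; ring.
          * eapply Un_cv_eq_lim. apply Un_cv_const. unfold Lp. simpl INR. unfold Rdiv; ring.
        + apply Un_cv_ext_from with (N := 1%nat)
            (v := fun i => poisson lambda (S m) / lambda * Uu alpha i (S m) * (Hm alpha (S m) i / (c0 alpha * ln (INR i + 1)))).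
          * intros i Hi. unfold w. apply w_eq; auto.
          * eapply Un_cv_eq_lim. apply CV_mult. apply CV_mult. apply Un_cv_const. apply Uu_cv; auto.
            apply V_cv; auto. unfold Lp. field. lra.
      - intros i m Hi. unfold w. pose proof (poisson_pos lambda m Hl).
        assert (HB: 0 <= poisson lambda m / lambda * (Cb alpha * Lam alpha ^ m)).
        { apply Rmult_le_pos. apply Rdiv_le_0_compat; lra.
          pose proof (W_exp alpha 0 Ha). unfold Wm in H0.
          assert (0 <= Cb alpha).
          { unfold Cb. pose proof (rp_nonneg (2 + alpha) (1 + alpha)). pose proof (rp_nonneg (2 + alpha) alpha).
            pose proof (Cp_ge1 alpha Ha). pose proof (c0_pos alpha Ha).
            assert (0 <= Cp alpha * (2 + alpha + rp (2 + alpha) alpha)) by (apply Rmult_le_pos; lra).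
            assert (0 <= (1 + rp (2 + alpha) (1 + alpha) + Cp alpha * (2 + alpha + rp (2 + alpha) alpha)) / c0 alpha)
              by (apply Rdiv_le_0_compat; lra). lra. }
          apply Rmult_le_pos; auto. apply pow_le. left; apply Lam_pos; auto. }
        destruct m.
        + rewrite yterm_0. unfold Rdiv at 1. rewrite Rmult_0_l, Rabs_R0. auto.
        + rewrite w_eq by (auto; lia).
          destruct (Uu_bounds alpha i (S m) Ha ltac:(lia) ltac:(lia)) as [_ [U0 U1]].
          destruct (V_bound alpha m i Ha Hi) as [V0 V1].
          pose proof (W_exp alpha m Ha). unfold Wm in H0.
          assert (Hp: 0 <= poisson lambda (S m) / lambda) by (apply Rdiv_le_0_compat; lra).
          rewrite Rabs_right.
          2: { apply Rle_ge. apply Rmult_le_pos; [apply Rmult_le_pos|]; lra. }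
          rewrite Rmult_assoc. apply Rmult_le_compat_l; auto.
          apply Rle_trans with (1 * (Hm alpha (S m) i / (c0 alpha * ln (INR i + 1)))).
          apply Rmult_le_compat_r; lra. lra.
      - eapply inf_sum_ext; [| apply inf_sum_scal with (c := / lambda * Cb alpha); apply poisson_exp].
        intros; unfold Rdiv; ring.
      - apply Lp_sum; auto.
      - intros i Hi. unfold w. replace (y i / Dp lambda alpha i) with (/ Dp lambda alpha i * y i) by (unfold Rdiv; ring).
        eapply inf_sum_ext; [| apply inf_sum_scal with (c := / Dp lambda alpha i); apply Hy; lia].
        intros; unfold Rdiv; ring. }
    apply Un_cv_ext_from with (N := 2%nat) (v := fun i => y i / Dp lambda alpha i * (ln (INR i + 1) / ln (INR i))).
    + intros i Hi. unfold Dp.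
      pose proof (Gamma_pos (2 + alpha) ltac:(lra)). pose proof (Rpower_pos (INR i) (- 2 - alpha)).
      pose proof (ln_i1_pos i ltac:(lia)).
      assert (0 < ln (INR i)) by (apply le_INR in Hi; simpl in Hi; rewrite <- ln_1; apply ln_increasing; lra).
      assert (0 < (1 + alpha) ^ 2) by (apply pow_lt; lra).
      field. repeat split; lra.
    + eapply Un_cv_eq_lim. apply CV_mult. apply Ht. apply lnratio_cv. ring.
Qed.
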